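(* Let $M$ be a term of the CCV $\lambda\mu$-calculus and let $[\![M]\!]$ be its CPS translation, computed from an arbitrary syntax-tree representative of $M$ (the representatives may differ in how the equality (E2) is used to bracket $\mu$ and $\mathsf{where}$). If $[\![M]\!]\to^* N$ by $\beta\eta$-reduction in the target calculus, then $M\to^*(N^{-1})^{\downarrow}$ in the CCV $\lambda\mu$-calculus.
   Context: CCV $\lambda\mu$-calculus. Ordinary variables $x,y,z,\dots$ and continuation variables $k,l,m,\dots$ form disjoint sets. Terms $M$ and jumps $J$ are given by $M ::= x \mid \lambda x.M \mid MM \mid (M\ \mathsf{where}\ x:=M) \mid \mu k.J$ and $J ::= [k]M \mid (J\ \mathsf{where}\ x:=M)$. (Here $(L\ \mathsf{where}\ x:=M)$ is the let-construct $\mathsf{let}\ x=M\ \mathsf{in}\ L$ written body-first.) $\lambda x$ binds $x$ in its body; in $(L\ \mathsf{where}\ x:=M)$ and $(J\ \mathsf{where}\ x:=M)$ the variable $x$ is bound with scope $L$ (resp. $J$) only; $\mu k$ binds $k$. Terms and jumps are identified up to $\alpha$-conversion and up to the congruence generated by: (E1) $(L\ \mathsf{where}\ x:=(M\ \mathsf{where}\ y:=N))=((L\ \mathsf{where}\ x:=M)\ \mathsf{where}\ y:=N)$ if $y$ is not free in $L$; (E2) $((\mu k.J)\ \mathsf{where}\ x:=M)=\mu k.(J\ \mathsf{where}\ x:=M)$ if $k$ is not free in $M$; (E3) $[k](L\ \mathsf{where}\ x:=M)=([k]L\ \mathsf{where}\ x:=M)$. A value $V$ is a variable or a $\lambda$-abstraction;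 other terms are non-values ($N$ below denotes a non-value). Reduction rules ($z$ fresh): (ad$_1$) $NM\to (zM\ \mathsf{where}\ z:=N)$; (ad$_2$) $VN\to (Vz\ \mathsf{where}\ z:=N)$; ($\beta_\lambda$) $(\lambda x.M)V\to (M\ \mathsf{where}\ x:=V)$; ($\beta_{let}$) $(M\ \mathsf{where}\ x:=V)\to M\{V/x\}$; ($\beta_\mu$) $(M\ \mathsf{where}\ x:=\mu k.J)\to \mu k.J\{[k]\square\mapsto[k](M\ \mathsf{where}\ x:=\square)\}$; ($\beta_{jmp}$) $[l]\mu k.J\to J\{l/k\}$; ($\eta_\lambda$) $\lambda x.Vx\to V$ ($x$ not free in $V$); ($\eta_{let}$) $(x\ \mathsf{where}\ x:=M)\to M$; ($\eta_\mu$) $\mu k.[k]M\to M$ ($k$ not free in $M$). Here $J\{[k]\square\mapsto[k](M\ \mathsf{where}\ x:=\square)\}$ replaces, recursively, each subjump $[k]Q$ of $J$ with $k$ free by $[k](M\ \mathsf{where}\ x:=Q)$ (capture-avoiding), and $J\{l/k\}$ replaces each such $[k]Q$ by $[l]Q$. $\to$ is the compatible closure of these rules, $\to^*$ its reflexive-transitive closure. Reduction by $\eta_\mu$ is called vertical; $M^{\downarrow}$ denotes the normal form of $M$ with respect to vertical reductions. Target calculus: a sorted $\lambda$-calculus with ordinary variables $x$ (sort $W$) and continuation variables $k$ (sort $K$): $T::=\lambda k.Q\mid WW$, $Q::=KW\mid TK$, $W::=x\mid\lambda x.T$, $K::=k\mid\lambda x.Q$, with ordinary $\beta\eta$-reduction.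 CPS translation: for a CCV term $M$ and a target continuation $K$, define $\langle M\rangle[K]$ and $\langle J\rangle$ by: $\langle V\rangle[K]=KV^*$; $\langle V_1V_2\rangle[K]=V_1^*V_2^*K$; $\langle VN\rangle[K]=\langle N\rangle[\lambda y.V^*yK]$; $\langle NV\rangle[K]=\langle N\rangle[\lambda x.xV^*K]$; $\langle N_1N_2\rangle[K]=\langle N_1\rangle[\lambda x.\langle N_2\rangle[\lambda y.xyK]]$; $\langle (L\ \mathsf{where}\ x:=M)\rangle[K]=\langle M\rangle[\lambda x.\langle L\rangle[K]]$ (renaming $x$ if it is free in $K$); $\langle\mu k.J\rangle[K]=(\lambda k.\langle J\rangle)K$; $\langle[k]M\rangle=\langle M\rangle[k]$; $\langle (J\ \mathsf{where}\ x:=M)\rangle=\langle M\rangle[\lambda x.\langle J\rangle]$; $x^*=x$; $(\lambda x.M)^*=\lambda x k.\langle M\rangle[k]$; $[\![M]\!]=\lambda k.\langle M\rangle[k]$ (fresh $x,y,k$ where introduced). Inverse translation from the target calculus to CCV: $(\lambda k.Q)^{-1}=\mu k.Q^{-1}$; $(W_1W_2)^{-1}=W_1^{-1}W_2^{-1}$; $(KW)^{-1}=K^{-1}[W^{-1}]$; $(TK)^{-1}=K^{-1}[T^{-1}]$; $x^{-1}=x$; $(\lambda x.T)^{-1}=\lambda x.T^{-1}$; $k^{-1}=[k]\square$; $(\lambda x.Q)^{-1}=(Q^{-1}\ \mathsf{where}\ x:=\square)$, where $K^{-1}$ is a jump with one hole $\square$ and $K^{-1}[M]$ fills the hole with $M$.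 *)

(* Defs.v *)
(* Both calculi use de Bruijn indices with TWO separate index
   spaces: ordinary variables (bound by lambda / where) and continuation
   variables (bound by mu, resp. the target's continuation lambda).
   alpha-conversion is therefore syntactic identity. *)
From Stdlib Require Import Arith Relations.

(* [Wh L M] is (L where 0 := M): index 0 is bound in L only.
   [JWh J M] is (J where 0 := M): index 0 bound in J only.
   [Mu J] binds continuation index 0 in J.  [Jmp k M] is [k]M. *)
Inductive tm : Type :=
| Var : nat -> tm
| Lam : tm -> tm
| App : tm -> tm -> tm
| Wh  : tm -> tm -> tm
| Mu  : jm -> tm
with jm : Type :=
| Jmp : nat -> tm -> jm
| JWh : jm -> tm -> jm.

Definition is_val (t : tm) : bool :=
  match t with Var _ | Lam _ => true | _ => false end.

Fixpoint sho (c : nat) (t : tm) : tm :=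
  match t with
  | Var x => Var (if x <? c then x else S x)
  | Lam b => Lam (sho (S c) b)
  | App a b => App (sho c a) (sho c b)
  | Wh l m => Wh (sho (S c) l) (sho c m)
  | Mu j => Mu (shoj c j)
  end
with shoj (c : nat) (j : jm) : jm :=
  match j with
  | Jmp k m => Jmp k (sho c m)
  | JWh j m => JWh (shoj (S c) j) (sho c m)
  end.

Fixpoint shk (c : nat) (t : tm) : tm :=
  match t with
  | Var x => Var x
  | Lam b => Lam (shk c b)
  | App a b => App (shk c a) (shk c b)
  | Wh l m => Wh (shk c l) (shk c m)
  | Mu j => Mu (shkj (S c) j)
  end
with shkj (c : nat) (j : jm) : jm :=
  match j with
  | Jmp k m => Jmp (if k <? c then k else S k) (shk c m)
  | JWh j m => JWh (shkj c j) (shk c m)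
  end.

Fixpoint subst_o (j : nat) (V : tm) (t : tm) : tm :=
  match t with
  | Var x => if x =? j then V else if j <? x then Var (pred x) else Var x
  | Lam b => Lam (subst_o (S j) (sho 0 V) b)
  | App a b => App (subst_o j V a) (subst_o j V b)
  | Wh l m => Wh (subst_o (S j) (sho 0 V) l) (subst_o j V m)
  | Mu J => Mu (subst_oj j (shk 0 V) J)
  end
with subst_oj (j : nat) (V : tm) (J : jm) : jm :=
  match J with
  | Jmp k m => Jmp k (subst_o j V m)
  | JWh J m => JWh (subst_oj (S j) (sho 0 V) J) (subst_o j V m)
  end.

Fixpoint crn (j l : nat) (t : tm) : tm :=
  match t with
  | Var x => Var x
  | Lam b => Lam (crn j l b)
  | App a b => App (crn j l a) (crn j l b)
  | Wh a b => Wh (crn j l a) (crn j l b)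
  | Mu J => Mu (crnj (S j) (S l) J)
  end
with crnj (j l : nat) (J : jm) : jm :=
  match J with
  | Jmp k m => Jmp (if k =? j then l else if j <? k then pred k else k) (crn j l m)
  | JWh J m => JWh (crnj j l J) (crn j l m)
  end.

(* structural substitution J{[j]□ ↦ [j](M where 0 := □)}; in M, ordinary
   index 0 is the variable bound by the new "where". *)
Fixpoint ssub (j : nat) (M : tm) (t : tm) : tm :=
  match t with
  | Var x => Var x
  | Lam b => Lam (ssub j (sho 1 M) b)
  | App a b => App (ssub j M a) (ssub j M b)
  | Wh l m => Wh (ssub j (sho 1 M) l) (ssub j M m)
  | Mu J => Mu (ssubj (S j) (shk 0 M) J)
  end
with ssubj (j : nat) (M : tm) (J : jm) : jm :=
  match J with
  | Jmp k q => if k =? j then Jmp k (Wh M (ssub j M q)) else Jmp k (ssub j M q)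
  | JWh J m => JWh (ssubj j (sho 1 M) J) (ssub j M m)
  end.

Inductive eqt : tm -> tm -> Prop :=
| eqt_refl t : eqt t t
| eqt_sym t u : eqt t u -> eqt u t
| eqt_trans t u v : eqt t u -> eqt u v -> eqt t v
| eqt_E1 L M N : eqt (Wh L (Wh M N)) (Wh (Wh (sho 1 L) M) N)
| eqt_E2 J M : eqt (Wh (Mu J) M) (Mu (JWh J (shk 0 M)))
| eqt_Lam t t' : eqt t t' -> eqt (Lam t) (Lam t')
| eqt_App a a' b b' : eqt a a' -> eqt b b' -> eqt (App a b) (App a' b')
| eqt_Wh a a' b b' : eqt a a' -> eqt b b' -> eqt (Wh a b) (Wh a' b')
| eqt_Mu J J' : eqj J J' -> eqt (Mu J) (Mu J')
with eqj : jm -> jm -> Prop :=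
| eqj_refl J : eqj J J
| eqj_sym J J' : eqj J J' -> eqj J' J
| eqj_trans J1 J2 J3 : eqj J1 J2 -> eqj J2 J3 -> eqj J1 J3
| eqj_E3 k L M : eqj (Jmp k (Wh L M)) (JWh (Jmp k L) M)
| eqj_Jmp k t t' : eqt t t' -> eqj (Jmp k t) (Jmp k t')
| eqj_JWh J J' t t' : eqj J J' -> eqt t t' -> eqj (JWh J t) (JWh J' t').

Inductive comp (Rt : tm -> tm -> Prop) (Rj : jm -> jm -> Prop) : tm -> tm -> Prop :=
| comp_root t u : Rt t u -> comp Rt Rj t u
| comp_Lam t u : comp Rt Rj t u -> comp Rt Rj (Lam t) (Lam u)
| comp_App1 a a' b : comp Rt Rj a a' -> comp Rt Rj (App a b) (App a' b)
| comp_App2 a b b' : comp Rt Rj b b' -> comp Rt Rj (App a b) (App a b')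
| comp_Wh1 a a' b : comp Rt Rj a a' -> comp Rt Rj (Wh a b) (Wh a' b)
| comp_Wh2 a b b' : comp Rt Rj b b' -> comp Rt Rj (Wh a b) (Wh a b')
| comp_Mu J J' : compj Rt Rj J J' -> comp Rt Rj (Mu J) (Mu J')
with compj (Rt : tm -> tm -> Prop) (Rj : jm -> jm -> Prop) : jm -> jm -> Prop :=
| compj_root J J' : Rj J J' -> compj Rt Rj J J'
| compj_Jmp k t u : comp Rt Rj t u -> compj Rt Rj (Jmp k t) (Jmp k u)
| compj_JWh1 J J' t : compj Rt Rj J J' -> compj Rt Rj (JWh J t) (JWh J' t)
| compj_JWh2 J t t' : comp Rt Rj t t' -> compj Rt Rj (JWh J t) (JWh J t').

Inductive top_t : tm -> tm -> Prop :=
| r_ad1 N M : is_val N = false ->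
    top_t (App N M) (Wh (App (Var 0) (sho 0 M)) N)
| r_ad2 V N : is_val V = true -> is_val N = false ->
    top_t (App V N) (Wh (App (sho 0 V) (Var 0)) N)
| r_beta_lam M V : is_val V = true -> top_t (App (Lam M) V) (Wh M V)
| r_beta_let M V : is_val V = true -> top_t (Wh M V) (subst_o 0 V M)
| r_beta_mu M J : top_t (Wh M (Mu J)) (Mu (ssubj 0 (shk 0 M) J))
| r_eta_lam V : is_val V = true -> top_t (Lam (App (sho 0 V) (Var 0))) V
| r_eta_let M : top_t (Wh (Var 0) M) M
| r_eta_mu M : top_t (Mu (Jmp 0 (shk 0 M))) M.

Inductive top_j : jm -> jm -> Prop :=
| r_beta_jmp l J : top_j (Jmp l (Mu J)) (crnj 0 l J).

Inductive vtop_t : tm -> tm -> Prop :=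
| v_eta_mu M : vtop_t (Mu (Jmp 0 (shk 0 M))) M.
Inductive vtop_j : jm -> jm -> Prop := .

Definition red : tm -> tm -> Prop :=
  clos_refl_trans tm (fun a b => eqt a b \/ comp top_t top_j a b).

Definition vred : tm -> tm -> Prop :=
  clos_refl_trans tm (fun a b => eqt a b \/ comp vtop_t vtop_j a b).

Definition vnf (P : tm) : Prop :=
  forall P' P'', eqt P P' -> ~ comp vtop_t vtop_j P' P''.

(* WLam, KLam bind ordinary index 0; TLamK binds continuation index 0 *)
Inductive tT : Type :=
| TLamK : tQ -> tT
| TApp : tW -> tW -> tT
with tQ : Type :=
| QK : tK -> tW -> tQ
| QT : tT -> tK -> tQ
with tW : Type :=
| WVar : nat -> tW
| WLam : tT -> tW
with tK : Type :=
| KVar : nat -> tK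
| KLam : tQ -> tK.

Fixpoint shWT (c : nat) (t : tT) : tT :=
  match t with TLamK q => TLamK (shWQ c q) | TApp a b => TApp (shWW c a) (shWW c b) end
with shWQ (c : nat) (q : tQ) : tQ :=
  match q with QK k w => QK (shWK c k) (shWW c w) | QT t k => QT (shWT c t) (shWK c k) end
with shWW (c : nat) (w : tW) : tW :=
  match w with WVar x => WVar (if x <? c then x else S x) | WLam t => WLam (shWT (S c) t) end
with shWK (c : nat) (k : tK) : tK :=
  match k with KVar n => KVar n | KLam q => KLam (shWQ (S c) q) end.

Fixpoint shKT (c : nat) (t : tT) : tT :=
  match t with TLamK q => TLamK (shKQ (S c) q) | TApp a b => TApp (shKW c a) (shKW c b) end
with shKQ (c : nat) (q : tQ) : tQ :=
  match q with QK k w => QK (shKK c k) (shKW c w) | QT t k => QT (shKT c t) (shKK c k) end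
with shKW (c : nat) (w : tW) : tW :=
  match w with WVar x => WVar x | WLam t => WLam (shKT c t) end
with shKK (c : nat) (k : tK) : tK :=
  match k with KVar n => KVar (if n <? c then n else S n) | KLam q => KLam (shKQ c q) end.

Fixpoint subWT (j : nat) (v : tW) (t : tT) : tT :=
  match t with
  | TLamK q => TLamK (subWQ j (shKW 0 v) q)
  | TApp a b => TApp (subWW j v a) (subWW j v b)
  end
with subWQ (j : nat) (v : tW) (q : tQ) : tQ :=
  match q with
  | QK k w => QK (subWK j v k) (subWW j v w)
  | QT t k => QT (subWT j v t) (subWK j v k)
  end
with subWW (j : nat) (v : tW) (w : tW) : tW :=
  match w with
  | WVar x => if x =? j then v else if j <? x then WVar (pred x) else WVar x
  | WLam t => WLam (subWT (S j) (shWW 0 v) t)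
  end
with subWK (j : nat) (v : tW) (k : tK) : tK :=
  match k with
  | KVar n => KVar n
  | KLam q => KLam (subWQ (S j) (shWW 0 v) q)
  end.

Fixpoint subKT (j : nat) (c : tK) (t : tT) : tT :=
  match t with
  | TLamK q => TLamK (subKQ (S j) (shKK 0 c) q)
  | TApp a b => TApp (subKW j c a) (subKW j c b)
  end
with subKQ (j : nat) (c : tK) (q : tQ) : tQ :=
  match q with
  | QK k w => QK (subKK j c k) (subKW j c w)
  | QT t k => QT (subKT j c t) (subKK j c k)
  end
with subKW (j : nat) (c : tK) (w : tW) : tW :=
  match w with
  | WVar x => WVar x
  | WLam t => WLam (subKT j (shWK 0 c) t)
  end
with subKK (j : nat) (c : tK) (k : tK) : tK :=
  match k with
  | KVar n => if n =? j then c else if j <? n then KVar (pred n) else KVar n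
  | KLam q => KLam (subKQ j (shWK 0 c) q)
  end.

Inductive stT : tT -> tT -> Prop :=
| stT_beta t w : stT (TApp (WLam t) w) (subWT 0 w t)
| stT_eta t : stT (TLamK (QT (shKT 0 t) (KVar 0))) t
| stT_Lam q q' : stQ q q' -> stT (TLamK q) (TLamK q')
| stT_App1 a a' b : stW a a' -> stT (TApp a b) (TApp a' b)
| stT_App2 a b b' : stW b b' -> stT (TApp a b) (TApp a b')
with stQ : tQ -> tQ -> Prop :=
| stQ_betaK q k : stQ (QT (TLamK q) k) (subKQ 0 k q)
| stQ_betaW q w : stQ (QK (KLam q) w) (subWQ 0 w q)
| stQ_K1 k k' w : stK k k' -> stQ (QK k w) (QK k' w)
| stQ_K2 k w w' : stW w w' -> stQ (QK k w) (QK k w')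
| stQ_T1 t t' k : stT t t' -> stQ (QT t k) (QT t' k)
| stQ_T2 t k k' : stK k k' -> stQ (QT t k) (QT t k')
with stW : tW -> tW -> Prop :=
| stW_eta w : stW (WLam (TApp (shWW 0 w) (WVar 0))) w
| stW_Lam t t' : stT t t' -> stW (WLam t) (WLam t')
with stK : tK -> tK -> Prop :=
| stK_eta k : stK (KLam (QK (shWK 0 k) (WVar 0))) k
| stK_Lam q q' : stQ q q' -> stK (KLam q) (KLam q').

Definition tred : tT -> tT -> Prop := clos_refl_trans tT stT.

Definition up (r : nat -> nat) : nat -> nat :=
  fun i => match i with 0 => 0 | S i => S (r i) end.

(* cps M ro rk K = <M>[K], where ro / rk map the free ordinary / continuation
   variables of the source term M to target indices. *)
Fixpoint cps (M : tm) (ro rk : nat -> nat) (K : tK) {struct M} : tQ :=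
  match M with
  | Var x => QK K (WVar (ro x))
  | Lam b => QK K (WLam (TLamK (cps b (up ro) (fun i => S (rk i)) (KVar 0))))
  | App a b =>
      if is_val a then
        if is_val b then QT (TApp (star a ro rk) (star b ro rk)) K
        else cps b ro rk (KLam (QT (TApp (shWW 0 (star a ro rk)) (WVar 0)) (shWK 0 K)))
      else
        if is_val b then
          cps a ro rk (KLam (QT (TApp (WVar 0) (shWW 0 (star b ro rk))) (shWK 0 K)))
        else
          cps a ro rk (KLam (cps b (fun i => S (ro i)) rk
                               (KLam (QT (TApp (WVar 1) (WVar 0)) (shWK 0 (shWK 0 K))))))
  | Wh l m => cps m ro rk (KLam (cps l (up ro) rk (shWK 0 K)))
  | Mu J => QT (TLamK (cpsj J ro (up rk))) K
  end
with star (M : tm) (ro rk : nat -> nat) {struct M} : tW :=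
  match M with
  | Var x => WVar (ro x)
  | Lam b => WLam (TLamK (cps b (up ro) (fun i => S (rk i)) (KVar 0)))
  | _ => WVar 0 (* not used: star is only applied to values *)
  end
with cpsj (J : jm) (ro rk : nat -> nat) {struct J} : tQ :=
  match J with
  | Jmp k m => cps m ro rk (KVar (rk k))
  | JWh J m => cps m ro rk (KLam (cpsj J (up ro) rk))
  end.

Definition cps_top (M : tm) : tT := TLamK (cps M (fun i => i) S (KVar 0)).

Fixpoint invT (t : tT) : tm :=
  match t with
  | TLamK q => Mu (invQ q)
  | TApp a b => App (invW a) (invW b)
  end
with invQ (q : tQ) : jm :=
  match q with
  | QK k w => invK k (invW w)
  | QT t k => invK k (invT t)
  end
with invW (w : tW) : tm :=
  match w with
  | WVar x => Var x
  | WLam t => Lam (invT t)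
  end
with invK (k : tK) (M : tm) : jm :=
  match k with
  | KVar n => Jmp n M
  | KLam q => JWh (invQ q) M
  end.

(* Main.v *)
Require Import Defs.
From Stdlib Require Import Relations Arith Lia Bool List.

Scheme tm_ind' := Induction for tm Sort Prop
with jm_ind' := Induction for jm Sort Prop.
Combined Scheme tmjm_ind from tm_ind', jm_ind'.

Ltac arith := repeat (match goal with
 | |- context [?a <? ?b] => destruct (Nat.ltb_spec a b)
 | |- context [?a =? ?b] => destruct (Nat.eqb_spec a b)
 | H: context [?a <? ?b] |- _ => destruct (Nat.ltb_spec a b)
 | H: context [?a =? ?b] |- _ => destruct (Nat.eqb_spec a b)
 end); try lia.

Definition shiftf (c x : nat) : nat := if x <? c then x else S x.
Definition crnf (j l k : nat) : nat := if k =? j then l else if j <? k then pred k else k.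

Fixpoint ren (r s : nat -> nat) (t : tm) : tm :=
 match t with
 | Var x => Var (r x)
 | Lam b => Lam (ren (up r) s b)
 | App a b => App (ren r s a) (ren r s b)
 | Wh l m => Wh (ren (up r) s l) (ren r s m)
 | Mu J => Mu (renj r (up s) J)
 end
with renj (r s : nat -> nat) (J : jm) : jm :=
 match J with
 | Jmp k m => Jmp (s k) (ren r s m)
 | JWh J m => JWh (renj (up r) s J) (ren r s m)
 end.

Lemma up_ext r r' : (forall x, r x = r' x) -> forall x, up r x = up r' x.
Proof. intros H [|x]; simpl; auto. Qed.

Lemma ren_ext_all :
 (forall t r r' s s', (forall x, r x = r' x) -> (forall x, s x = s' x) -> ren r s t = ren r' s' t) /\
 (forall J r r' s s', (forall x, r x = r' x) -> (forall x, s x = s' x) -> renj r s J = renj r' s' J).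
Proof.
 apply tmjm_ind; intros; simpl; f_equal; eauto using up_ext.
Qed.
Lemma ren_ext t r r' s s' : (forall x, r x = r' x) -> (forall x, s x = s' x) -> ren r s t = ren r' s' t.
Proof. apply ren_ext_all. Qed.
Lemma renj_ext J r r' s s' : (forall x, r x = r' x) -> (forall x, s x = s' x) -> renj r s J = renj r' s' J.
Proof. apply ren_ext_all. Qed.

Lemma ren_ren_all :
 (forall t r s r' s', ren r s (ren r' s' t) = ren (fun x => r (r' x)) (fun x => s (s' x)) t) /\
 (forall J r s r' s', renj r s (renj r' s' J) = renj (fun x => r (r' x)) (fun x => s (s' x)) J).
Proof.
 apply tmjm_ind; intros; simpl; f_equal; try rewrite H; try rewrite H0; auto;
  try (apply ren_ext; intros [|x]; simpl; auto);
  try (apply renj_ext; intros [|x]; simpl; auto).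
Qed.
Lemma ren_ren t r s r' s' : ren r s (ren r' s' t) = ren (fun x => r (r' x)) (fun x => s (s' x)) t.
Proof. apply ren_ren_all. Qed.
Lemma renj_ren J r s r' s' : renj r s (renj r' s' J) = renj (fun x => r (r' x)) (fun x => s (s' x)) J.
Proof. apply ren_ren_all. Qed.

Lemma ren_id_all :
 (forall t r s, (forall x, r x = x) -> (forall x, s x = x) -> ren r s t = t) /\
 (forall J r s, (forall x, r x = x) -> (forall x, s x = x) -> renj r s J = J).
Proof.
 apply tmjm_ind; intros; simpl; f_equal; eauto;
  try (apply H; intros [|x]; simpl; auto);
  try (apply H0; intros [|x]; simpl; auto);
  try (apply H; auto; intros [|x]; simpl; auto).
Qed.
Lemma ren_id t r s : (forall x, r x = x) -> (forall x, s x = x) -> ren r s t = t.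
Proof. apply ren_id_all. Qed.

Lemma sho_ren_all :
 (forall t c, sho c t = ren (shiftf c) (fun x => x) t) /\
 (forall J c, shoj c J = renj (shiftf c) (fun x => x) J).
Proof.
 apply tmjm_ind; intros; simpl; f_equal; eauto;
 try rewrite H; try rewrite H0; auto;
 try (apply ren_ext; intros [|x]; unfold shiftf; simpl; arith);
 try (apply renj_ext; intros [|x]; unfold shiftf; simpl; arith).
Qed.
Lemma sho_ren t c : sho c t = ren (shiftf c) (fun x => x) t.
Proof. apply sho_ren_all. Qed.
Lemma shoj_ren J c : shoj c J = renj (shiftf c) (fun x => x) J.
Proof. apply sho_ren_all. Qed.

Lemma shk_ren_all :
 (forall t c, shk c t = ren (fun x => x) (shiftf c) t) /\
 (forall J c, shkj c J = renj (fun x => x) (shiftf c) J).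
Proof.
 apply tmjm_ind; intros; simpl; f_equal; eauto;
 try rewrite H; try rewrite H0; auto;
 try (apply ren_ext; intros [|x]; unfold shiftf; simpl; arith);
 try (apply renj_ext; intros [|x]; unfold shiftf; simpl; arith).
Qed.
Lemma shk_ren t c : shk c t = ren (fun x => x) (shiftf c) t.
Proof. apply shk_ren_all. Qed.
Lemma shkj_ren J c : shkj c J = renj (fun x => x) (shiftf c) J.
Proof. apply shk_ren_all. Qed.

Lemma crn_ren_all :
 (forall t j l, crn j l t = ren (fun x => x) (crnf j l) t) /\
 (forall J j l, crnj j l J = renj (fun x => x) (crnf j l) J).
Proof.
 apply tmjm_ind; intros; simpl; f_equal; eauto;
 try rewrite H; try rewrite H0; auto;
 try (apply ren_ext; intros [|x]; unfold crnf; simpl; arith);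
 try (apply renj_ext; intros [|x]; unfold crnf; simpl; arith).
Qed.
Lemma crn_ren t j l : crn j l t = ren (fun x => x) (crnf j l) t.
Proof. apply crn_ren_all. Qed.
Lemma crnj_ren J j l : crnj j l J = renj (fun x => x) (crnf j l) J.
Proof. apply crn_ren_all. Qed.

Fixpoint kocc (n : nat) (t : tm) : bool :=
 match t with
 | Var _ => false
 | Lam b => kocc n b
 | App a b => kocc n a || kocc n b
 | Wh l m => kocc n l || kocc n m
 | Mu J => koccj (S n) J
 end
with koccj (n : nat) (J : jm) : bool :=
 match J with
 | Jmp k m => (k =? n) || kocc n m
 | JWh J m => koccj n J || kocc n m
 end.

Lemma kocc_ren1_all :
 (forall t r s k, kocc k t = true -> kocc (s k) (ren r s t) = true) /\
 (forall J r s k, koccj k J = true -> koccj (s k) (renj r s J) = true).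
Proof.
 apply tmjm_ind; intros; simpl in *; try discriminate;
 repeat rewrite orb_true_iff in *.
 all: try match goal with H: _ \/ _ |- _ => destruct H; [left|right] end; eauto.
 - apply (H r (up s) (S k)); auto.
 - apply Nat.eqb_eq in H0. subst. apply Nat.eqb_refl.
Qed.

Lemma kocc_ren2_all :
 (forall t r s n, kocc n (ren r s t) = true -> exists k, s k = n /\ kocc k t = true) /\
 (forall J r s n, koccj n (renj r s J) = true -> exists k, s k = n /\ koccj k J = true).
Proof.
 apply tmjm_ind; intros; simpl in *; try discriminate;
 repeat rewrite orb_true_iff in *; eauto.
 - destruct H1 as [H1|H1]; [destruct (H _ _ _ H1) as [k [? ?]]|destruct (H0 _ _ _ H1) as [k [? ?]]];
   exists k; rewrite H3; auto with bool.
 - destruct H1 as [H1|H1]; [destruct (H _ _ _ H1) as [k [? ?]]|destruct (H0 _ _ _ H1) as [k [? ?]]];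
   exists k; rewrite H3; auto with bool.
 - destruct (H _ _ _ H0) as [[|k] [E ?]]; simpl in E; try discriminate.
   injection E; intros; subst; eauto.
 - destruct H0 as [H0|H0].
   + apply Nat.eqb_eq in H0; subst. exists n. rewrite Nat.eqb_refl; auto.
   + destruct (H _ _ _ H0) as [k [? ?]]; exists k; rewrite H2; auto with bool.
 - destruct H1 as [H1|H1]; [destruct (H _ _ _ H1) as [k [? ?]]|destruct (H0 _ _ _ H1) as [k [? ?]]];
   exists k; rewrite H3; auto with bool.
Qed.

Lemma kocc_ren1 t r s k : kocc k t = true -> kocc (s k) (ren r s t) = true.
Proof. apply kocc_ren1_all. Qed.
Lemma kocc_ren2 t r s n : kocc n (ren r s t) = true -> exists k, s k = n /\ kocc k t = true.
Proof. apply kocc_ren2_all. Qed.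
Lemma koccj_ren1 J r s k : koccj k J = true -> koccj (s k) (renj r s J) = true.
Proof. apply kocc_ren1_all. Qed.
Lemma koccj_ren2 J r s n : koccj n (renj r s J) = true -> exists k, s k = n /\ koccj k J = true.
Proof. apply kocc_ren2_all. Qed.

Lemma kocc_ren_false t r s n : (forall k, kocc k t = true -> s k <> n) -> kocc n (ren r s t) = false.
Proof.
 intros H. destruct (kocc n (ren r s t)) eqn:E; auto.
 destruct (kocc_ren2 _ _ _ _ E) as [k [? ?]]. exfalso; eapply H; eauto.
Qed.
Lemma koccj_ren_false J r s n : (forall k, koccj k J = true -> s k <> n) -> koccj n (renj r s J) = false.
Proof.
 intros H. destruct (koccj n (renj r s J)) eqn:E; auto.
 destruct (koccj_ren2 _ _ _ _ E) as [k [? ?]]. exfalso; eapply H; eauto.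
Qed.

Lemma kocc_ren_inj t r s m : (forall k, s k = s m -> k = m) -> kocc (s m) (ren r s t) = kocc m t.
Proof.
 intros H. destruct (kocc m t) eqn:E.
 - apply kocc_ren1; auto.
 - apply kocc_ren_false. intros k Hk Hs. apply H in Hs; subst; congruence.
Qed.

Lemma kocc_reno t r n : kocc n (ren r (fun x => x) t) = kocc n t.
Proof. apply (kocc_ren_inj t r (fun x => x) n); auto. Qed.

Lemma ren_ext_occ_all :
 (forall t r r' s s', (forall x, r x = r' x) -> (forall k, kocc k t = true -> s k = s' k) -> ren r s t = ren r' s' t) /\
 (forall J r r' s s', (forall x, r x = r' x) -> (forall k, koccj k J = true -> s k = s' k) -> renj r s J = renj r' s' J).
Proof.
 apply tmjm_ind; intros; simpl in *; f_equal; eauto using up_ext;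
 try (apply H; eauto using up_ext; intros; apply H1; rewrite H2; auto with bool; fail);
 try (apply H0; eauto using up_ext; intros; apply H2; rewrite H3; auto with bool; fail);
 try (apply H; eauto using up_ext; intros; apply H2; rewrite H3; auto with bool; fail).
 all: try (apply H; auto; intros [|k] Hk; simpl; auto; fail).
 all: try (apply H1; rewrite Nat.eqb_refl; auto; fail).
 all: try (apply H; auto; intros; apply H1; rewrite H2; auto with bool; fail).
Qed.
Lemma ren_ext_occ t r r' s s' : (forall x, r x = r' x) -> (forall k, kocc k t = true -> s k = s' k) -> ren r s t = ren r' s' t.
Proof. apply ren_ext_occ_all. Qed.

Lemma unshift_eq t c : kocc c t = false -> shk c (crn c c t) = t.
Proof.
 intros H. rewrite shk_ren, crn_ren, ren_ren.
 transitivity (ren (fun x => x) (fun x => x) t).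
 - apply ren_ext_occ; auto. intros k Hk. unfold shiftf, crnf. arith. subst; congruence.
 - apply ren_id; auto.
Qed.

Lemma crn_shk t c l : crn c l (shk c t) = t.
Proof.
 rewrite shk_ren, crn_ren, ren_ren. apply ren_id; auto. intros x; unfold shiftf, crnf; arith.
Qed.

Lemma kocc_shk t c : kocc c (shk c t) = false.
Proof. rewrite shk_ren. apply kocc_ren_false. intros k _. unfold shiftf; arith. Qed.

Lemma is_val_ren t r s : is_val (ren r s t) = is_val t.
Proof. destruct t; reflexivity. Qed.

Lemma ren_upid_all :
 (forall t s, ren (up (fun x => x)) s t = ren (fun x => x) s t) /\
 (forall J s, renj (up (fun x => x)) s J = renj (fun x => x) s J).
Proof. split; intros; [apply ren_ext|apply renj_ext]; intros [|x]; auto. Qed.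
Lemma ren_upid t s : ren (up (fun x => x)) s t = ren (fun x => x) s t.
Proof. apply ren_upid_all. Qed.
Lemma renj_upid J s : renj (up (fun x => x)) s J = renj (fun x => x) s J.
Proof. apply ren_upid_all. Qed.

Ltac rnorm := rewrite ?sho_ren, ?shk_ren, ?crn_ren, ?shoj_ren, ?shkj_ren, ?crnj_ren, ?ren_ren, ?renj_ren.
Definition svf (j i x : nat) : nat := if x =? j then i else if j <? x then pred x else x.
Ltac arith_up := unfold shiftf, crnf, svf, up in *; repeat (simpl in *; arith;
  try match goal with |- context [match ?x with 0 => _ | S _ => _ end] => destruct x end); simpl; try lia.
Ltac rext := first [apply ren_ext | apply renj_ext]; intros; arith_up.

Lemma ren_sho_comm V s c : ren (fun x => x) s (sho c V) = sho c (ren (fun x => x) s V).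
Proof. rnorm. rext. Qed.
Lemma ren_shk0_comm V r s : ren r (up s) (shk 0 V) = shk 0 (ren r s V).
Proof. rnorm. rext. Qed.

Lemma ren_subst_all :
 (forall t s j V, ren (fun x => x) s (subst_o j V t) = subst_o j (ren (fun x => x) s V) (ren (fun x => x) s t)) /\
 (forall J s j V, renj (fun x => x) s (subst_oj j V J) = subst_oj j (ren (fun x => x) s V) (renj (fun x => x) s J)).
Proof.
 apply tmjm_ind; intros; simpl; rewrite ?ren_upid, ?renj_upid; f_equal; auto.
 - destruct (n =? j); auto. destruct (j <? n); auto.
 - rewrite H. rewrite ren_sho_comm. auto.
 - rewrite H. rewrite ren_sho_comm. auto.
 - rewrite H. rewrite ren_shk0_comm. auto.
 - rewrite H. rewrite ren_sho_comm. auto.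
Qed.
Lemma ren_subst t s j V : ren (fun x => x) s (subst_o j V t) = subst_o j (ren (fun x => x) s V) (ren (fun x => x) s t).
Proof. apply ren_subst_all. Qed.
Lemma renj_subst J s j V : renj (fun x => x) s (subst_oj j V J) = subst_oj j (ren (fun x => x) s V) (renj (fun x => x) s J).
Proof. apply ren_subst_all. Qed.

Lemma kocc_sho n c V : kocc n (sho c V) = kocc n V.
Proof. rewrite sho_ren. apply kocc_reno. Qed.
Lemma kocc_shk0 n V : kocc (S n) (shk 0 V) = kocc n V.
Proof. rewrite shk_ren. apply (kocc_ren_inj V (fun x => x) (shiftf 0) n). intros k; unfold shiftf; arith. Qed.

Lemma kocc_subst1_all :
 (forall t n j V, kocc n t = true -> kocc n (subst_o j V t) = true) /\
 (forall J n j V, koccj n J = true -> koccj n (subst_oj j V J) = true).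
Proof.
 apply tmjm_ind; intros; simpl in *; repeat rewrite orb_true_iff in *; try discriminate;
 try match goal with H: _ \/ _ |- _ => destruct H; [left|right] end; eauto.
Qed.
Lemma kocc_subst2_all :
 (forall t n j V, kocc n (subst_o j V t) = true -> kocc n t = true \/ kocc n V = true) /\
 (forall J n j V, koccj n (subst_oj j V J) = true -> koccj n J = true \/ kocc n V = true).
Proof.
 apply tmjm_ind; intros; simpl in *; repeat rewrite orb_true_iff in *; try discriminate.
 - destruct (n =? j); auto. destruct (j <? n); simpl in *; discriminate.
 - destruct (H _ _ _ H0); auto. rewrite kocc_sho in H1; auto.
 - destruct H1 as [H1|H1]; [destruct (H _ _ _ H1)|destruct (H0 _ _ _ H1)]; auto.
 - destruct H1 as [H1|H1]; [destruct (H _ _ _ H1)|destruct (H0 _ _ _ H1)]; auto.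
   rewrite kocc_sho in H2; auto.
 - destruct (H _ _ _ H0); auto. rewrite kocc_shk0 in H1; auto.
 - destruct H0 as [H0|H0]; auto. destruct (H _ _ _ H0); auto.
 - destruct H1 as [H1|H1]; [destruct (H _ _ _ H1)|destruct (H0 _ _ _ H1)]; auto.
   rewrite kocc_sho in H2; auto.
Qed.
Lemma kocc_subst1 t n j V : kocc n t = true -> kocc n (subst_o j V t) = true.
Proof. apply kocc_subst1_all. Qed.
Lemma kocc_subst2 t n j V : kocc n (subst_o j V t) = true -> kocc n t = true \/ kocc n V = true.
Proof. apply kocc_subst2_all. Qed.
Lemma koccj_subst2 J n j V : koccj n (subst_oj j V J) = true -> koccj n J = true \/ kocc n V = true.
Proof. apply kocc_subst2_all. Qed.
Lemma kocc_subst_eq t n j V : kocc n V = false -> kocc n (subst_o j V t) = kocc n t.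
Proof.
 intros H. destruct (kocc n t) eqn:E. apply kocc_subst1; auto.
 destruct (kocc n (subst_o j V t)) eqn:E2; auto. destruct (kocc_subst2 _ _ _ _ E2); congruence.
Qed.

Lemma subst_var_all :
 (forall t j i, subst_o j (Var i) t = ren (svf j i) (fun x => x) t) /\
 (forall J j i, subst_oj j (Var i) J = renj (svf j i) (fun x => x) J).
Proof.
 apply tmjm_ind; intros; simpl; f_equal; auto;
 try rewrite H; try rewrite H0; try (rext; fail).
 all: try (unfold svf; arith; fail).
 all: try (apply renj_ext; intros [|x]; auto; fail).
 unfold svf; destruct (n =? j); auto; destruct (j <? n); auto.
Qed.
Lemma subst_var t j i : subst_o j (Var i) t = ren (svf j i) (fun x => x) t.
Proof. apply subst_var_all. Qed.

Lemma subst_var_sho t : subst_o 0 (Var 0) (sho 1 t) = t.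
Proof. rewrite subst_var, sho_ren, ren_ren. apply ren_id; auto. intros; unfold svf, shiftf; arith. Qed.

Fixpoint jhead (J : jm) : nat := match J with Jmp k _ => k | JWh J _ => jhead J end.
Fixpoint jbody (J : jm) : tm := match J with Jmp _ m => m | JWh J m => Wh (jbody J) m end.

Lemma jhead_ren J r s : jhead (renj r s J) = s (jhead J).
Proof. revert r; induction J as [?k ?m|J IHJ ?m]; simpl; auto. Qed.
Lemma jbody_ren J r s : jbody (renj r s J) = ren r s (jbody J).
Proof. revert r; induction J as [?k ?m|J IHJ ?m]; simpl; intros; auto. rewrite IHJ; auto. Qed.
Lemma jhead_subst J j V : jhead (subst_oj j V J) = jhead J.
Proof. revert j V; induction J as [?k ?m|J IHJ ?m]; simpl; auto. Qed.
Lemma jbody_subst J j V : jbody (subst_oj j V J) = subst_o j V (jbody J).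
Proof. revert j V; induction J as [?k ?m|J IHJ ?m]; simpl; intros; auto. rewrite IHJ; auto. Qed.
Lemma kocc_jbody J n : jhead J <> n -> koccj n J = kocc n (jbody J).
Proof. induction J as [?k ?m|J IHJ ?m]; simpl; intros. arith; reflexivity. rewrite IHJ; auto. Qed.
Lemma kocc_jbody_le J n : kocc n (jbody J) = true -> koccj n J = true.
Proof. induction J as [?k ?m|J IHJ ?m]; simpl; intros H; rewrite ?H; auto with bool.
 apply orb_true_iff in H; destruct H as [H|H]; [rewrite (IHJ H)|rewrite H]; auto with bool. Qed.

Lemma ren_sho1_comm M r s : ren (up (up r)) s (sho 1 M) = sho 1 (ren (up r) s M).
Proof. rnorm. rext. Qed.

Lemma ren_ssub_all :
 (forall t r s j M, (forall k, s k = s j -> k = j) ->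
    ren r s (ssub j M t) = ssub (s j) (ren (up r) s M) (ren r s t)) /\
 (forall J r s j M, (forall k, s k = s j -> k = j) ->
    renj r s (ssubj j M J) = ssubj (s j) (ren (up r) s M) (renj r s J)).
Proof.
 apply tmjm_ind; intros; simpl; f_equal; auto.
 - rewrite H; auto. rewrite ren_sho1_comm; auto.
 - rewrite H; auto. rewrite ren_sho1_comm; auto.
 - rewrite H. simpl. rewrite ren_shk0_comm. auto.
   intros [|k]; simpl; intros E; try discriminate. injection E; intros E'. apply H0 in E'. subst; auto.
 - destruct (Nat.eqb_spec n j); subst.
   + rewrite Nat.eqb_refl. simpl. rewrite H; auto.
   + destruct (Nat.eqb_spec (s n) (s j)). apply H0 in e; contradiction.
     simpl; rewrite H; auto.
 - rewrite H; auto. rewrite ren_sho1_comm; auto.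
Qed.
Lemma ren_ssub t r s j M : (forall k, s k = s j -> k = j) ->
    ren r s (ssub j M t) = ssub (s j) (ren (up r) s M) (ren r s t).
Proof. apply ren_ssub_all. Qed.
Lemma renj_ssub J r s j M : (forall k, s k = s j -> k = j) ->
    renj r s (ssubj j M J) = ssubj (s j) (ren (up r) s M) (renj r s J).
Proof. apply ren_ssub_all. Qed.

Lemma kocc_ssub1_all :
 (forall t n j M, kocc n t = true -> kocc n (ssub j M t) = true) /\
 (forall J n j M, koccj n J = true -> koccj n (ssubj j M J) = true).
Proof.
 apply tmjm_ind; intros; simpl in *; repeat rewrite orb_true_iff in *; try discriminate;
 try match goal with H: _ \/ _ |- _ => destruct H; [left|right] end; eauto.
 destruct (n =? j); simpl; rewrite orb_true_iff; (destruct H0; [left; auto|right]); auto.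
 simpl; rewrite orb_true_iff; auto.
Qed.
Lemma kocc_ssub2_all :
 (forall t n j M, kocc n (ssub j M t) = true -> kocc n t = true \/ kocc n M = true) /\
 (forall J n j M, koccj n (ssubj j M J) = true -> koccj n J = true \/ kocc n M = true).
Proof.
 apply tmjm_ind; intros; simpl in *; repeat rewrite orb_true_iff in *; try discriminate.
 - destruct (H _ _ _ H0); auto. rewrite kocc_sho in H1; auto.
 - destruct H1 as [H1|H1]; [destruct (H _ _ _ H1)|destruct (H0 _ _ _ H1)]; auto.
 - destruct H1 as [H1|H1]; [destruct (H _ _ _ H1)|destruct (H0 _ _ _ H1)]; auto.
   rewrite kocc_sho in H2; auto.
 - destruct (H _ _ _ H0); auto. rewrite kocc_shk0 in H1; auto.
 - destruct (n =? j); simpl in H0; rewrite orb_true_iff in H0; destruct H0 as [H0|H0]; auto.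
   simpl in H0; rewrite orb_true_iff in H0. destruct H0 as [H0|H0]; auto.
   destruct (H _ _ _ H0); auto.
   destruct (H _ _ _ H0); auto.
 - destruct H1 as [H1|H1]; [destruct (H _ _ _ H1)|destruct (H0 _ _ _ H1)]; auto.
   rewrite kocc_sho in H2; auto.
Qed.
Lemma kocc_ssub1 t n j M : kocc n t = true -> kocc n (ssub j M t) = true.
Proof. apply kocc_ssub1_all. Qed.
Lemma kocc_ssub2 t n j M : kocc n (ssub j M t) = true -> kocc n t = true \/ kocc n M = true.
Proof. apply kocc_ssub2_all. Qed.
Lemma koccj_ssub2 J n j M : koccj n (ssubj j M J) = true -> koccj n J = true \/ kocc n M = true.
Proof. apply kocc_ssub2_all. Qed.
Lemma kocc_ssub_eq t n j M : kocc n M = false -> kocc n (ssub j M t) = kocc n t.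
Proof.
 intros H. destruct (kocc n t) eqn:E. apply kocc_ssub1; auto.
 destruct (kocc n (ssub j M t)) eqn:E2; auto. destruct (kocc_ssub2 _ _ _ _ E2); congruence.
Qed.

Lemma ssub_id_all :
 (forall t j M, kocc j t = false -> ssub j M t = t) /\
 (forall J j M, koccj j J = false -> ssubj j M J = J).
Proof.
 apply tmjm_ind; intros; simpl in *; repeat rewrite orb_false_iff in *; f_equal; intuition.
 rewrite H1. f_equal; auto.
Qed.
Lemma ssub_id t j M : kocc j t = false -> ssub j M t = t.
Proof. apply ssub_id_all. Qed.

Lemma jhead_ssub J j M : jhead (ssubj j M J) = jhead J.
Proof. revert M; induction J as [k m|J IHJ m]; simpl; intros; auto. destruct (k =? j); auto. Qed.
Lemma jbody_ssub J j M : jhead J <> j -> jbody (ssubj j M J) = ssub j M (jbody J).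
Proof.
 revert M; induction J as [k m|J IHJ m]; simpl; intros; auto.
 - destruct (Nat.eqb_spec k j); try contradiction; auto.
 - rewrite IHJ; auto.
Qed.

Scheme eqt_ind' := Induction for eqt Sort Prop
with eqj_ind' := Induction for eqj Sort Prop.
Combined Scheme eqtj_ind from eqt_ind', eqj_ind'.

Lemma kocc_eqt_all :
 (forall a b, eqt a b -> forall n, kocc n a = kocc n b) /\
 (forall J J', eqj J J' -> forall n, koccj n J = koccj n J').
Proof.
 apply eqtj_ind; intros; simpl; auto; try congruence.
 - rewrite kocc_sho, orb_assoc. auto.
 - rewrite kocc_shk0. auto.
 - rewrite orb_assoc; auto.
Qed.
Lemma kocc_eqt a b n : eqt a b -> kocc n a = kocc n b.
Proof. intros; apply kocc_eqt_all; auto. Qed.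
Lemma koccj_eqj a b n : eqj a b -> koccj n a = koccj n b.
Proof. intros; apply kocc_eqt_all; auto. Qed.

Lemma eqt_ren_all :
 (forall a b, eqt a b -> forall r s, eqt (ren r s a) (ren r s b)) /\
 (forall J J', eqj J J' -> forall r s, eqj (renj r s J) (renj r s J')).
Proof.
 apply eqtj_ind; intros; simpl; eauto using eqt, eqj.
 - rewrite ren_sho1_comm. apply eqt_E1.
 - rewrite ren_shk0_comm. apply eqt_E2.
Qed.
Lemma eqt_ren a b r s : eqt a b -> eqt (ren r s a) (ren r s b).
Proof. intros; apply eqt_ren_all; auto. Qed.
Lemma eqj_ren a b r s : eqj a b -> eqj (renj r s a) (renj r s b).
Proof. intros; apply eqt_ren_all; auto. Qed.
Lemma eqt_sho a b c : eqt a b -> eqt (sho c a) (sho c b).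
Proof. rewrite !sho_ren. apply eqt_ren. Qed.
Lemma eqt_shk a b c : eqt a b -> eqt (shk c a) (shk c b).
Proof. rewrite !shk_ren. apply eqt_ren. Qed.
Lemma eqt_crn a b c l : eqt a b -> eqt (crn c l a) (crn c l b).
Proof. rewrite !crn_ren. apply eqt_ren. Qed.

Lemma ssub_eqt_all :
 (forall a b, eqt a b -> forall j M, eqt (ssub j M a) (ssub j M b)) /\
 (forall J J', eqj J J' -> forall j M, eqj (ssubj j M J) (ssubj j M J')).
Proof.
 apply eqtj_ind; intros; simpl; eauto using eqt, eqj.
 -
   assert (E: ssub j (sho 1 (sho 1 M0)) (sho 1 L) = sho 1 (ssub j (sho 1 M0) L)).
   { rewrite (sho_ren (ssub _ _ _)). rewrite ren_ssub by auto. f_equal.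
     rnorm. rext. rewrite sho_ren; auto. }
   rewrite E. apply eqt_E1.
 -
   assert (E: ssubj (S j) (sho 1 (shk 0 M0)) J = ssubj (S j) (shk 0 (sho 1 M0)) J).
   { f_equal. rnorm. rext. }
   rewrite E.
   assert (E': ssub (S j) (shk 0 M0) (shk 0 M) = shk 0 (ssub j M0 M)).
   { rewrite (shk_ren (ssub _ _ _)). rewrite ren_ssub. f_equal. rnorm. rext.
     rewrite shk_ren; auto. intros k; unfold shiftf; arith. }
   rewrite E'. apply eqt_E2.
 - destruct (k =? j); simpl; eauto using eqt, eqj.
 - destruct (k =? j); eauto using eqt, eqj.
Qed.
Lemma ssub_eqt a b j M : eqt a b -> eqt (ssub j M a) (ssub j M b).
Proof. intros; apply ssub_eqt_all; auto. Qed.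
Lemma ssubj_eqj a b j M : eqj a b -> eqj (ssubj j M a) (ssubj j M b).
Proof. intros; apply ssub_eqt_all; auto. Qed.

Lemma flat_eqj J J' : eqj J J' -> jhead J = jhead J' /\ eqt (jbody J) (jbody J').
Proof.
 induction 1; simpl; intuition eauto using eqt.
 congruence.
Qed.
Lemma eqj_flat J : eqj J (Jmp (jhead J) (jbody J)).
Proof.
 induction J as [k m|J IHJ m]; simpl. apply eqj_refl.
 eapply eqj_trans. apply eqj_JWh. apply IHJ. apply eqt_refl.
 apply eqj_sym, eqj_E3.
Qed.

Definition col (K : jm) : tm :=
  if (jhead K =? 0) && negb (kocc 0 (jbody K)) then crn 0 0 (jbody K) else Mu K.

Fixpoint vn (t : tm) : tm :=
 match t with
 | Var x => Var x
 | Lam b => Lam (vn b)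
 | App a b => App (vn a) (vn b)
 | Wh l m => Wh (vn l) (vn m)
 | Mu J => col (vnj J)
 end
with vnj (J : jm) : jm :=
 match J with
 | Jmp k m => Jmp k (vn m)
 | JWh J m => JWh (vnj J) (vn m)
 end.

Lemma jhead_vn J : jhead (vnj J) = jhead J.
Proof. induction J; simpl; auto. Qed.
Lemma jbody_vn J : jbody (vnj J) = vn (jbody J).
Proof. induction J; simpl; auto. rewrite IHJ; auto. Qed.
Lemma is_val_vn t : is_val t = true -> is_val (vn t) = true.
Proof. destruct t; simpl; auto; discriminate. Qed.

Lemma koccj_flat J n : koccj n J = (jhead J =? n) || kocc n (jbody J).
Proof. induction J; simpl; auto. rewrite IHJ, orb_assoc; auto. Qed.

Lemma kocc_col K n : kocc n (col K) = koccj (S n) K.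
Proof.
 unfold col. rewrite koccj_flat.
 destruct (Nat.eqb_spec (jhead K) 0); simpl.
 - rewrite e. destruct (kocc 0 (jbody K)) eqn:E; simpl.
   + rewrite koccj_flat, e. auto.
   + rewrite <- (unshift_eq _ _ E) at 2. rewrite kocc_shk0. auto.
 - rewrite koccj_flat. auto.
Qed.

Lemma kocc_vn_all :
 (forall t n, kocc n (vn t) = kocc n t) /\ (forall J n, koccj n (vnj J) = koccj n J).
Proof.
 apply tmjm_ind; intros; simpl; rewrite ?H, ?H0; auto.
 rewrite kocc_col. auto.
Qed.
Lemma kocc_vn t n : kocc n (vn t) = kocc n t.
Proof. apply kocc_vn_all. Qed.

Lemma col_eqj K K' : eqj K K' -> eqt (col K) (col K').
Proof.
 intros H. destruct (flat_eqj _ _ H) as [H1 H2]. unfold col.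
 rewrite H1, (kocc_eqt _ _ 0 H2).
 destruct ((jhead K' =? 0) && negb (kocc 0 (jbody K'))).
 apply eqt_crn; auto. apply eqt_Mu; auto.
Qed.

Lemma col_shift K X : jhead K = 0 -> jbody K = shk 0 X -> col K = X.
Proof.
 intros H1 H2. unfold col. rewrite H1, H2, kocc_shk. simpl. apply crn_shk.
Qed.
Lemma col_noshift K : jhead K <> 0 -> col K = Mu K.
Proof. intros H. unfold col. destruct (Nat.eqb_spec (jhead K) 0); try contradiction. auto. Qed.
Lemma col_occ K : kocc 0 (jbody K) = true -> col K = Mu K.
Proof. intros H. unfold col. rewrite H. rewrite andb_false_r. auto. Qed.

Ltac colcases K :=
  let E := fresh "E" in let h := fresh "h" in let HS := fresh "HS" in let X := fresh "X" in
  destruct (Nat.eqb_spec (jhead K) 0) as [h|h];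
  [ destruct (kocc 0 (jbody K)) eqn:E;
    [ | pose proof (unshift_eq _ _ E) as HS; set (X := crn 0 0 (jbody K)) in * ] | ].

Lemma vn_ren_all :
 (forall t r s, vn (ren r s t) = ren r s (vn t)) /\
 (forall J r s, vnj (renj r s J) = renj r s (vnj J)).
Proof.
 apply tmjm_ind; intros; simpl; rewrite ?H, ?H0; auto.
 set (K := vnj j).
 colcases K.
 - rewrite !col_occ; auto. rewrite jbody_ren.
   rewrite <- (kocc_ren_inj _ r (up s) 0) in E; auto. intros [|k]; simpl; auto; discriminate.
 - rewrite (col_shift K X); auto.
   apply col_shift. rewrite jhead_ren, h; auto.
   rewrite jbody_ren, <- HS. apply ren_shk0_comm.
 - rewrite !col_noshift; auto. rewrite jhead_ren. destruct (jhead K); simpl; auto.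
Qed.
Lemma vn_ren t r s : vn (ren r s t) = ren r s (vn t).
Proof. apply vn_ren_all. Qed.
Lemma vnj_ren J r s : vnj (renj r s J) = renj r s (vnj J).
Proof. apply vn_ren_all. Qed.
Lemma vn_sho t c : vn (sho c t) = sho c (vn t).
Proof. rewrite !sho_ren. apply vn_ren. Qed.
Lemma vn_shk t c : vn (shk c t) = shk c (vn t).
Proof. rewrite !shk_ren. apply vn_ren. Qed.
Lemma vn_crn t c l : vn (crn c l t) = crn c l (vn t).
Proof. rewrite !crn_ren. apply vn_ren. Qed.
Lemma vnj_crn J c l : vnj (crnj c l J) = crnj c l (vnj J).
Proof. rewrite !crnj_ren. apply vnj_ren. Qed.

Lemma shk_subst X j V : shk 0 (subst_o j V X) = subst_o j (shk 0 V) (shk 0 X).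
Proof. rewrite !shk_ren. apply ren_subst. Qed.

Lemma vn_subst_all :
 (forall t j V, vn (subst_o j V t) = subst_o j (vn V) (vn t)) /\
 (forall J j V, vnj (subst_oj j V J) = subst_oj j (vn V) (vnj J)).
Proof.
 apply tmjm_ind; intros; simpl; rewrite ?H, ?H0, ?vn_sho, ?vn_shk; auto.
 - destruct (n =? j); auto. destruct (j <? n); auto.
 - set (K := vnj j). set (V' := vn V).
   colcases K.
   + rewrite !col_occ; auto. rewrite jbody_subst, kocc_subst_eq; auto. apply kocc_shk.
   + rewrite (col_shift K X); auto.
     apply col_shift. rewrite jhead_subst, h; auto.
     rewrite jbody_subst, <- HS, shk_subst. rewrite HS. auto.
   + rewrite !col_noshift; auto. rewrite jhead_subst; auto.
Qed.
Lemma vn_subst t j V : vn (subst_o j V t) = subst_o j (vn V) (vn t).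
Proof. apply vn_subst_all. Qed.
Lemma vnj_subst J j V : vnj (subst_oj j V J) = subst_oj j (vn V) (vnj J).
Proof. apply vn_subst_all. Qed.

Lemma shk_ssub X j M : shk 0 (ssub j M X) = ssub (S j) (shk 0 M) (shk 0 X).
Proof.
 rewrite !shk_ren. rewrite ren_ssub. rewrite ren_upid. auto.
 intros k; unfold shiftf; simpl; arith.
Qed.

Lemma vn_ssub_all :
 (forall t j M, vn (ssub j M t) = ssub j (vn M) (vn t)) /\
 (forall J j M, vnj (ssubj j M J) = ssubj j (vn M) (vnj J)).
Proof.
 apply tmjm_ind; intros; simpl; rewrite ?H, ?H0, ?vn_sho, ?vn_shk; auto.
 - set (K := vnj j). set (M' := vn M).
   colcases K.
   + rewrite !col_occ; auto. rewrite jbody_ssub, kocc_ssub_eq; auto. apply kocc_shk. lia.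
   + rewrite (col_shift K X); auto.
     apply col_shift. rewrite jhead_ssub, h; auto.
     rewrite jbody_ssub, <- HS, shk_ssub. rewrite HS. auto. lia.
   + rewrite !col_noshift; auto. rewrite jhead_ssub; auto.
 - destruct (n =? j); simpl; rewrite ?H; auto.
Qed.
Lemma vn_ssub t j M : vn (ssub j M t) = ssub j (vn M) (vn t).
Proof. apply vn_ssub_all. Qed.
Lemma vnj_ssub J j M : vnj (ssubj j M J) = ssubj j (vn M) (vnj J).
Proof. apply vn_ssub_all. Qed.

Lemma vn_eqt_all :
 (forall a b, eqt a b -> eqt (vn a) (vn b)) /\
 (forall J J', eqj J J' -> eqj (vnj J) (vnj J')).
Proof.
 apply eqtj_ind; intros; simpl; eauto using eqt, eqj, col_eqj.
 - rewrite vn_sho. apply eqt_E1.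
 - rewrite vn_shk. set (K := vnj J).
   colcases K.
   + rewrite !col_occ; simpl; rewrite ?E; simpl; auto using eqt_E2.
   + rewrite (col_shift K X); auto.
     rewrite (col_shift (JWh K (shk 0 (vn M))) (Wh X (vn M))). apply eqt_refl.
     simpl; auto. simpl. rewrite HS; auto.
   + rewrite !col_noshift; auto using eqt_E2.
Qed.
Lemma vn_eqt a b : eqt a b -> eqt (vn a) (vn b).
Proof. apply vn_eqt_all. Qed.
Lemma vnj_eqj a b : eqj a b -> eqj (vnj a) (vnj b).
Proof. apply vn_eqt_all. Qed.

Definition rstep (Rt : tm -> tm -> Prop) (Rj : jm -> jm -> Prop) a b := eqt a b \/ comp Rt Rj a b.
Definition RED Rt Rj := clos_refl_trans tm (rstep Rt Rj).
Definition rstepj (Rt : tm -> tm -> Prop) (Rj : jm -> jm -> Prop) a b := eqj a b \/ compj Rt Rj a b.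
Definition REDJ Rt Rj := clos_refl_trans jm (rstepj Rt Rj).

Scheme comp_ind' := Induction for comp Sort Prop
with compj_ind' := Induction for compj Sort Prop.
Combined Scheme compcj_ind from comp_ind', compj_ind'.

Section Cong.
Variables (Rt : tm -> tm -> Prop) (Rj : jm -> jm -> Prop).

Lemma RED_refl a : RED Rt Rj a a. Proof. apply rt_refl. Qed.
Lemma REDJ_refl a : REDJ Rt Rj a a. Proof. apply rt_refl. Qed.
Lemma RED_trans a b c : RED Rt Rj a b -> RED Rt Rj b c -> RED Rt Rj a c. Proof. apply rt_trans. Qed.
Lemma REDJ_trans a b c : REDJ Rt Rj a b -> REDJ Rt Rj b c -> REDJ Rt Rj a c. Proof. apply rt_trans. Qed.
Lemma RED_eqt a b : eqt a b -> RED Rt Rj a b. Proof. intros; apply rt_step; left; auto. Qed.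
Lemma REDJ_eqj a b : eqj a b -> REDJ Rt Rj a b. Proof. intros; apply rt_step; left; auto. Qed.
Lemma RED_comp a b : comp Rt Rj a b -> RED Rt Rj a b. Proof. intros; apply rt_step; right; auto. Qed.
Lemma REDJ_comp a b : compj Rt Rj a b -> REDJ Rt Rj a b. Proof. intros; apply rt_step; right; auto. Qed.
Lemma RED_root a b : Rt a b -> RED Rt Rj a b. Proof. intros; apply RED_comp, comp_root; auto. Qed.
Lemma REDJ_root a b : Rj a b -> REDJ Rt Rj a b. Proof. intros; apply REDJ_comp, compj_root; auto. Qed.

Ltac congr_tac C1 C2 :=
  intros H; induction H as [x y [H|H]| |]; [apply rt_step; (left; apply C1; auto using eqt, eqj) || (right; apply C2; auto) | apply rt_refl | eapply rt_trans; eauto].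

Lemma RED_Lam a b : RED Rt Rj a b -> RED Rt Rj (Lam a) (Lam b).
Proof.
 intros H; induction H as [x y [H|H]| |]; [apply rt_step; left|apply rt_step; right| apply rt_refl| eapply rt_trans; eauto].
 apply eqt_Lam; auto. apply comp_Lam; auto.
Qed.
Lemma RED_App1 a a' b : RED Rt Rj a a' -> RED Rt Rj (App a b) (App a' b).
Proof.
 intros H; induction H as [x y [H|H]| |]; [apply rt_step; left|apply rt_step; right| apply rt_refl| eapply rt_trans; eauto].
 apply eqt_App; auto using eqt_refl. apply comp_App1; auto.
Qed.
Lemma RED_App2 a b b' : RED Rt Rj b b' -> RED Rt Rj (App a b) (App a b').
Proof.
 intros H; induction H as [x y [H|H]| |]; [apply rt_step; left|apply rt_step; right| apply rt_refl| eapply rt_trans; eauto].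
 apply eqt_App; auto using eqt_refl. apply comp_App2; auto.
Qed.
Lemma RED_Wh1 a a' b : RED Rt Rj a a' -> RED Rt Rj (Wh a b) (Wh a' b).
Proof.
 intros H; induction H as [x y [H|H]| |]; [apply rt_step; left|apply rt_step; right| apply rt_refl| eapply rt_trans; eauto].
 apply eqt_Wh; auto using eqt_refl. apply comp_Wh1; auto.
Qed.
Lemma RED_Wh2 a b b' : RED Rt Rj b b' -> RED Rt Rj (Wh a b) (Wh a b').
Proof.
 intros H; induction H as [x y [H|H]| |]; [apply rt_step; left|apply rt_step; right| apply rt_refl| eapply rt_trans; eauto].
 apply eqt_Wh; auto using eqt_refl. apply comp_Wh2; auto.
Qed.
Lemma RED_Mu J J' : REDJ Rt Rj J J' -> RED Rt Rj (Mu J) (Mu J').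
Proof.
 intros H; induction H as [x y [H|H]| |]; [apply rt_step; left|apply rt_step; right| apply rt_refl| eapply rt_trans; eauto].
 apply eqt_Mu; auto. apply comp_Mu; auto.
Qed.
Lemma REDJ_Jmp k a b : RED Rt Rj a b -> REDJ Rt Rj (Jmp k a) (Jmp k b).
Proof.
 intros H; induction H as [x y [H|H]| |]; [apply rt_step; left|apply rt_step; right| apply rt_refl| eapply rt_trans; eauto].
 apply eqj_Jmp; auto. apply compj_Jmp; auto.
Qed.
Lemma REDJ_JWh1 J J' t : REDJ Rt Rj J J' -> REDJ Rt Rj (JWh J t) (JWh J' t).
Proof.
 intros H; induction H as [x y [H|H]| |]; [apply rt_step; left|apply rt_step; right| apply rt_refl| eapply rt_trans; eauto].
 apply eqj_JWh; auto using eqt_refl. apply compj_JWh1; auto.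
Qed.
Lemma REDJ_JWh2 J t t' : RED Rt Rj t t' -> REDJ Rt Rj (JWh J t) (JWh J t').
Proof.
 intros H; induction H as [x y [H|H]| |]; [apply rt_step; left|apply rt_step; right| apply rt_refl| eapply rt_trans; eauto].
 apply eqj_JWh; auto using eqj_refl. apply compj_JWh2; auto.
Qed.
Lemma RED_App a a' b b' : RED Rt Rj a a' -> RED Rt Rj b b' -> RED Rt Rj (App a b) (App a' b').
Proof. intros; eapply RED_trans; [apply RED_App1|apply RED_App2]; eauto. Qed.
Lemma RED_Wh a a' b b' : RED Rt Rj a a' -> RED Rt Rj b b' -> RED Rt Rj (Wh a b) (Wh a' b').
Proof. intros; eapply RED_trans; [apply RED_Wh1|apply RED_Wh2]; eauto. Qed.
Lemma REDJ_JWh J J' t t' : REDJ Rt Rj J J' -> RED Rt Rj t t' -> REDJ Rt Rj (JWh J t) (JWh J' t').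
Proof. intros; eapply REDJ_trans; [apply REDJ_JWh1|apply REDJ_JWh2]; eauto. Qed.
End Cong.

Lemma comp_mono (Rt Rt' : tm -> tm -> Prop) (Rj Rj' : jm -> jm -> Prop) :
  (forall a b, Rt a b -> Rt' a b) -> (forall a b, Rj a b -> Rj' a b) ->
  (forall a b, comp Rt Rj a b -> comp Rt' Rj' a b) /\ (forall a b, compj Rt Rj a b -> compj Rt' Rj' a b).
Proof.
 intros H1 H2. apply compcj_ind; intros; eauto using comp, compj.
Qed.
Lemma RED_mono (Rt Rt' : tm -> tm -> Prop) (Rj Rj' : jm -> jm -> Prop) :
  (forall a b, Rt a b -> Rt' a b) -> (forall a b, Rj a b -> Rj' a b) ->
  forall a b, RED Rt Rj a b -> RED Rt' Rj' a b.
Proof.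
 intros H1 H2 a b H; induction H as [x y [H|H]| |]; [apply rt_step; left|apply rt_step; right| apply rt_refl| eapply rt_trans; eauto].
 auto. apply (comp_mono _ _ _ _ H1 H2); auto.
Qed.
Lemma REDJ_mono (Rt Rt' : tm -> tm -> Prop) (Rj Rj' : jm -> jm -> Prop) :
  (forall a b, Rt a b -> Rt' a b) -> (forall a b, Rj a b -> Rj' a b) ->
  forall a b, REDJ Rt Rj a b -> REDJ Rt' Rj' a b.
Proof.
 intros H1 H2 a b H; induction H as [x y [H|H]| |]; [apply rt_step; left|apply rt_step; right| apply rt_refl| eapply rt_trans; eauto].
 auto. apply (comp_mono _ _ _ _ H1 H2); auto.
Qed.

Notation RD := (RED top_t top_j).
Notation RDJ := (REDJ top_t top_j).
Notation VR := (RED vtop_t vtop_j).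
Notation VRJ := (REDJ vtop_t vtop_j).

Lemma vtop_sub a b : vtop_t a b -> top_t a b. Proof. destruct 1; constructor. Qed.
Lemma vtopj_sub a b : vtop_j a b -> top_j a b. Proof. destruct 1. Qed.
Lemma VR_RD a b : VR a b -> RD a b. Proof. apply RED_mono; auto using vtop_sub, vtopj_sub. Qed.

Lemma comp_root_eq Rt Rj a b b' : Rt a b' -> b' = b -> comp Rt Rj a b.
Proof. intros; subst; apply comp_root; auto. Qed.
Lemma compj_root_eq Rt Rj a b b' : Rj a b' -> b' = b -> compj Rt Rj a b.
Proof. intros; subst; apply compj_root; auto. Qed.

Lemma ren_sho0_upid V s : ren (up (fun x => x)) s (sho 0 V) = sho 0 (ren (fun x => x) s V).
Proof. rnorm. rext. Qed.

Lemma comp_ren_all :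
 (forall a b, comp top_t top_j a b -> forall s, comp top_t top_j (ren (fun x => x) s a) (ren (fun x => x) s b)) /\
 (forall a b, compj top_t top_j a b -> forall s, compj top_t top_j (renj (fun x => x) s a) (renj (fun x => x) s b)).
Proof.
 apply compcj_ind; intros; simpl; rewrite ?ren_upid, ?renj_upid; eauto using comp, compj.
 - destruct r; simpl.
   + eapply comp_root_eq. apply r_ad1. rewrite is_val_ren; auto.
     simpl. rewrite ren_sho0_upid. auto.
   + eapply comp_root_eq. apply r_ad2; rewrite is_val_ren; auto.
     simpl. rewrite ren_sho0_upid. auto.
   + rewrite ren_upid. apply comp_root. apply r_beta_lam. rewrite is_val_ren; auto.
   + eapply comp_root_eq. apply r_beta_let. rewrite is_val_ren; auto.
     rewrite ren_upid, ren_subst; auto.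
   + eapply comp_root_eq. apply r_beta_mu.
     simpl. f_equal. rewrite renj_ssub. simpl. rewrite ren_shk0_comm, ren_upid. auto.
     intros [|k]; simpl; auto; discriminate.
   + rewrite ren_sho0_upid. apply comp_root. apply r_eta_lam. rewrite is_val_ren; eauto.
   + apply comp_root. apply r_eta_let.
   + rewrite ren_shk0_comm. apply comp_root. apply r_eta_mu.
 - destruct r; simpl.
   eapply compj_root_eq. apply r_beta_jmp.
   rewrite !crnj_ren, !renj_ren. apply renj_ext; intros; auto. unfold crnf; destruct x; simpl; arith.
Qed.

Lemma RD_ren a b s : RD a b -> RD (ren (fun x => x) s a) (ren (fun x => x) s b).
Proof.
 intros H; induction H as [x y [H|H]| |]; [apply rt_step; left|apply rt_step; right| apply rt_refl| eapply rt_trans; eauto].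
 apply eqt_ren; auto. apply comp_ren_all; auto.
Qed.
Lemma RD_crn a b c l : RD a b -> RD (crn c l a) (crn c l b).
Proof. rewrite !crn_ren. apply RD_ren. Qed.

Lemma kocc_dec_all :
 (forall a b, comp top_t top_j a b -> forall n, kocc n b = true -> kocc n a = true) /\
 (forall a b, compj top_t top_j a b -> forall n, koccj n b = true -> koccj n a = true).
Proof.
 apply (compcj_ind top_t top_j (fun a b _ => forall n, kocc n b = true -> kocc n a = true)
   (fun a b _ => forall n, koccj n b = true -> koccj n a = true)); intros; simpl in *; repeat rewrite orb_true_iff in *; try (intuition eauto; fail).
 - destruct r; simpl in *; repeat rewrite orb_true_iff in *; rewrite ?kocc_sho in *; try (intuition (eauto || discriminate); fail).
   all: try (destruct (kocc_subst2 _ _ _ _ H); auto; fail).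
   all: try (destruct (koccj_ssub2 _ _ _ _ H); auto; rewrite kocc_shk0 in *; auto; fail).
   all: try (rewrite kocc_shk0 in *; auto; fail).
 - match goal with H: top_j _ _ |- _ => destruct H end; simpl in *; rewrite orb_true_iff.
   rewrite crnj_ren in H. destruct (koccj_ren2 _ _ _ _ H) as [[|k] [E1 E2]]; unfold crnf in E1; simpl in E1.
   + left. subst. apply Nat.eqb_refl.
   + subst. right. auto.
Qed.
Lemma RD_kocc a b n : RD a b -> kocc n b = true -> kocc n a = true.
Proof.
 intros H; induction H as [x y [H|H]| |]; intros; eauto.
 rewrite (kocc_eqt _ _ n H); auto. eapply kocc_dec_all; eauto.
Qed.
Lemma RD_kocc_false a b n : RD a b -> kocc n a = false -> kocc n b = false.
Proof. intros H1 H2. destruct (kocc n b) eqn:E; auto. rewrite (RD_kocc _ _ _ H1 E) in H2; auto. Qed.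

Lemma Mu_col_VR K : VR (Mu K) (col K).
Proof.
 colcases K.
 - rewrite col_occ; auto. apply RED_refl.
 - rewrite (col_shift K X); auto. eapply RED_trans. apply RED_eqt. apply eqt_Mu. apply eqj_flat.
   rewrite h, <- HS. apply RED_root. apply v_eta_mu.
 - rewrite col_noshift; auto. apply RED_refl.
Qed.

Lemma VR_vn_all : (forall t, VR t (vn t)) /\ (forall J, VRJ J (vnj J)).
Proof.
 apply tmjm_ind; intros; simpl; auto using RED_Lam, RED_App, RED_Wh, REDJ_Jmp, REDJ_JWh, RED_refl.
 eapply RED_trans. apply RED_Mu; eauto. apply Mu_col_VR.
Qed.
Lemma RD_vn t : RD t (vn t).
Proof. apply VR_RD. apply VR_vn_all. Qed.

Lemma vstep_vn_all :
 (forall a b, comp vtop_t vtop_j a b -> eqt (vn a) (vn b)) /\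
 (forall a b, compj vtop_t vtop_j a b -> eqj (vnj a) (vnj b)).
Proof.
 apply compcj_ind; intros; simpl; eauto using eqt, eqj, col_eqj.
 - match goal with H: vtop_t _ _ |- _ => destruct H end; simpl. rewrite vn_shk. rewrite (col_shift _ (vn M)); auto using eqt_refl.
 - match goal with H: vtop_j _ _ |- _ => destruct H end.
Qed.
Lemma VR_vn a b : VR a b -> eqt (vn a) (vn b).
Proof.
 intros H; induction H as [x y [H|H]| |]; eauto using eqt.
 apply vn_eqt; auto. apply vstep_vn_all; auto.
Qed.

Lemma vnf_vn P : vnf P -> eqt P (vn P).
Proof.
 intros H. assert (G: forall Q R, VR Q R -> eqt P Q -> eqt P R).
 { intros Q R HQ. induction HQ as [x y [H1|H1]| |]; intros; eauto using eqt.
   exfalso. eapply H; eauto. }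
 apply G with P. apply VR_vn_all. apply eqt_refl.
Qed.


Inductive top_r : tm -> tm -> Prop :=
| rr_beta_lam M V : is_val V = true -> top_r (App (Lam M) V) (Wh M V)
| rr_beta_let M V : is_val V = true -> top_r (Wh M V) (subst_o 0 V M)
| rr_beta_mu M J : top_r (Wh M (Mu J)) (Mu (ssubj 0 (shk 0 M) J))
| rr_eta_lam V : is_val V = true -> top_r (Lam (App (sho 0 V) (Var 0))) V
| rr_eta_let M : top_r (Wh (Var 0) M) M
| rr_eta_mu M : top_r (Mu (Jmp 0 (shk 0 M))) M.

Notation RR := (RED top_r top_j).
Notation RRJ := (REDJ top_r top_j).

Fixpoint wrap (J : jm) (ms : list tm) : jm :=
  match ms with nil => J | m :: ms => wrap (JWh J m) ms end.
Fixpoint wrapt (b : tm) (ms : list tm) : tm :=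
  match ms with nil => b | m :: ms => wrapt (Wh b m) ms end.

Lemma jhead_wrap J ms : jhead (wrap J ms) = jhead J.
Proof. revert J; induction ms; simpl; intros; rewrite ?IHms; auto. Qed.
Lemma jbody_wrap J ms : jbody (wrap J ms) = wrapt (jbody J) ms.
Proof. revert J; induction ms; simpl; intros; rewrite ?IHms; auto. Qed.
Lemma vnj_wrap J ms : vnj (wrap J ms) = wrap (vnj J) (map vn ms).
Proof. revert J; induction ms; simpl; intros; rewrite ?IHms; auto. Qed.
Lemma vn_wrapt b ms : vn (wrapt b ms) = wrapt (vn b) (map vn ms).
Proof. revert b; induction ms; simpl; intros; rewrite ?IHms; auto. Qed.
Lemma RDJ_wrap J J' ms : RDJ J J' -> RDJ (wrap J ms) (wrap J' ms).
Proof. revert J J'; induction ms; simpl; intros; auto. apply IHms. apply REDJ_JWh1; auto. Qed.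
Lemma RD_wrapt b b' ms : RD b b' -> RD (wrapt b ms) (wrapt b' ms).
Proof. revert b b'; induction ms; simpl; intros; auto. apply IHms. apply RED_Wh1; auto. Qed.
Lemma kocc_wrapt n b ms : kocc n (wrapt b ms) = kocc n b || existsb (kocc n) ms.
Proof. revert b; induction ms; simpl; intros; auto. rewrite orb_false_r; auto. rewrite IHms. simpl. rewrite orb_assoc; auto. Qed.
Lemma shk_wrapt b ms : shk 0 (wrapt b ms) = wrapt (shk 0 b) (map (shk 0) ms).
Proof. revert b; induction ms; simpl; intros; auto. Qed.
Lemma crn_wrapt b ms : crn 0 0 (wrapt b ms) = wrapt (crn 0 0 b) (map (crn 0 0) ms).
Proof. revert b; induction ms; simpl; intros; auto. Qed.
Lemma eqt_wrapt b b' ms : eqt b b' -> eqt (wrapt b ms) (wrapt b' ms).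
Proof. revert b b'; induction ms; simpl; intros; auto. apply IHms. apply eqt_Wh; auto using eqt_refl. Qed.
Lemma wrapt_Mu K ms : eqt (wrapt (Mu K) ms) (Mu (wrap K (map (shk 0) ms))).
Proof.
 revert K; induction ms; simpl; intros. apply eqt_refl.
 eapply eqt_trans. apply eqt_wrapt. apply eqt_E2. apply IHms.
Qed.

Lemma Mu_col_RD K : RD (Mu K) (col K).
Proof. apply VR_RD, Mu_col_VR. Qed.
Lemma mu_nc K K' : col K = Mu K -> RDJ K K' -> RD (col K) (col K').
Proof. intros H1 H2. rewrite H1. eapply RED_trans. apply RED_Mu; eauto. apply Mu_col_RD. Qed.
Lemma col_collapse K : jhead K = 0 -> kocc 0 (jbody K) = false -> col K = crn 0 0 (jbody K).
Proof. intros H1 H2. unfold col. rewrite H1, H2. auto. Qed.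
Lemma mu_gen K K' : jhead K = jhead K' -> RDJ K K' -> RD (jbody K) (jbody K') -> RD (col K) (col K').
Proof.
 intros H1 H2 H3. colcases K.
 - apply mu_nc; auto. apply col_occ; auto.
 - rewrite (col_collapse K), (col_collapse K'); auto. apply RD_crn; auto.
   congruence. eapply RD_kocc_false; eauto.
 - apply mu_nc; auto. apply col_noshift; auto.
Qed.

Lemma jhead_crnj K j l : jhead (crnj j l K) = crnf j l (jhead K).
Proof. rewrite crnj_ren, jhead_ren; auto. Qed.
Lemma jbody_crnj K j l : jbody (crnj j l K) = crn j l (jbody K).
Proof. rewrite crnj_ren, jbody_ren, crn_ren; auto. Qed.

Lemma bjmp_j l K1 : RDJ (Jmp l (col K1)) (crnj 0 l K1).
Proof.
 colcases K1.
 - rewrite col_occ; auto. apply REDJ_root, r_beta_jmp.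
 - rewrite (col_shift K1 X); auto. apply REDJ_eqj. eapply eqj_trans. 2: apply eqj_sym, eqj_flat.
   rewrite jhead_crnj, jbody_crnj, h, <- HS, crn_shk. unfold crnf; simpl. apply eqj_refl.
 - rewrite col_noshift; auto. apply REDJ_root, r_beta_jmp.
Qed.

Lemma crnj11 K : koccj 1 K = false -> crnj 1 1 K = crnj 0 0 K.
Proof.
 intros H. assert (E: kocc 0 (Mu K) = false) by (simpl; auto).
 apply unshift_eq in E. simpl in E. injection E; intros E'.
 transitivity (crnj 0 0 (shkj 1 (crnj 1 1 K))); [|rewrite E'; auto].
 rewrite (shkj_ren (crnj 1 1 K)), (crnj_ren (renj _ _ _)), renj_ren.
 symmetry. apply ren_id_all; auto. intros x; unfold crnf, shiftf; arith; destruct x; simpl; lia.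
Qed.

Lemma map_shk_crn ms : existsb (kocc 0) ms = false -> map (shk 0) (map (crn 0 0) ms) = ms.
Proof.
 induction ms; simpl; intros; auto. apply orb_false_iff in H; destruct H.
 rewrite unshift_eq, IHms; auto.
Qed.

Lemma bjmp_mu l K1 ms : RD (col (wrap (Jmp l (col K1)) ms)) (col (wrap (crnj 0 l K1) ms)).
Proof.
 set (K := wrap (Jmp l (col K1)) ms).
 assert (HJ: RDJ K (wrap (crnj 0 l K1) ms)) by (apply RDJ_wrap, bjmp_j).
 colcases K.
 - apply mu_nc; auto. apply col_occ; auto.
 - rewrite (col_collapse K h E).
   unfold K in h, E. rewrite jhead_wrap in h; simpl in h. subst l.
   rewrite jbody_wrap in E; simpl in E.
   unfold K. rewrite jbody_wrap. simpl.
   colcases K1.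
   + rewrite col_occ in *; auto. rewrite kocc_wrapt in E. apply orb_false_iff in E as [E1 E2].
     eapply RED_trans. 2: apply Mu_col_RD. apply RED_eqt.
     rewrite crn_wrapt. simpl. eapply eqt_trans. apply wrapt_Mu.
     rewrite map_shk_crn, crnj11; auto using eqt_refl.
   + rewrite (col_shift K1 X0) in *; auto.
     rewrite (col_collapse (wrap (crnj 0 0 K1) ms)). rewrite jbody_wrap, jbody_crnj, <- HS0, crn_shk.
     apply RED_refl.
     rewrite jhead_wrap, jhead_crnj, h; auto.
     rewrite jbody_wrap, jbody_crnj, <- HS0, crn_shk; auto.
   + rewrite col_noshift in *; auto. rewrite kocc_wrapt in E. apply orb_false_iff in E as [E1 E2].
     eapply RED_trans. 2: apply Mu_col_RD. apply RED_eqt.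
     rewrite crn_wrapt. simpl. eapply eqt_trans. apply wrapt_Mu.
     rewrite map_shk_crn, crnj11; auto using eqt_refl.
 - apply mu_nc; auto. apply col_noshift; auto.
Qed.

Lemma proj_all :
 (forall a b, comp top_r top_j a b -> RD (vn a) (vn b)) /\
 (forall J J', compj top_r top_j J J' ->
    RDJ (vnj J) (vnj J') /\ forall ms, RD (col (wrap (vnj J) ms)) (col (wrap (vnj J') ms))).
Proof.
 apply (compcj_ind top_r top_j (fun a b _ => RD (vn a) (vn b))
   (fun J J' _ => RDJ (vnj J) (vnj J') /\ forall ms, RD (col (wrap (vnj J) ms)) (col (wrap (vnj J') ms))));
   intros; simpl.
 - destruct r; simpl.
   + apply RED_root. apply r_beta_lam. apply is_val_vn; auto.
   + rewrite vn_subst. apply RED_root. apply r_beta_let. apply is_val_vn; auto.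
   + rewrite vnj_ssub, vn_shk. set (K := vnj J). colcases K.
     * rewrite col_occ; auto. eapply RED_trans. apply RED_root. apply r_beta_mu. apply Mu_col_RD.
     * rewrite (col_shift K X); auto. apply RED_eqt. apply eqt_sym.
       eapply eqt_trans. apply col_eqj. apply ssubj_eqj. apply eqj_flat.
       rewrite h, <- HS. simpl. rewrite ssub_id by apply kocc_shk.
       rewrite (col_shift _ (Wh (vn M) X)); auto using eqt_refl.
     * rewrite col_noshift; auto. eapply RED_trans. apply RED_root. apply r_beta_mu. apply Mu_col_RD.
   + rewrite vn_sho. apply RED_root. apply r_eta_lam. apply is_val_vn; auto.
   + apply RED_root. apply r_eta_let.
   + rewrite vn_shk. rewrite (col_shift _ (vn M)); auto using RED_refl.
 - apply RED_Lam; auto.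
 - apply RED_App1; auto.
 - apply RED_App2; auto.
 - apply RED_Wh1; auto.
 - apply RED_Wh2; auto.
 - destruct H as [_ H]. apply (H nil).
 - match goal with H: top_j _ _ |- _ => destruct H end; simpl. rewrite vnj_crn.
   split. apply bjmp_j. intros; apply bjmp_mu.
 - split. apply REDJ_Jmp; auto.
   intros ms. apply mu_gen.
   rewrite !jhead_wrap; auto. apply RDJ_wrap, REDJ_Jmp; auto.
   rewrite !jbody_wrap; simpl. apply RD_wrapt; auto.
 - destruct H as [H1 H2]. split. apply REDJ_JWh1; auto.
   intros ms. apply (H2 (vn t :: ms)).
 - split. apply REDJ_JWh2; auto.
   intros ms. apply mu_gen.
   rewrite !jhead_wrap; auto. apply RDJ_wrap, REDJ_JWh2; auto.
   rewrite !jbody_wrap; simpl. apply RD_wrapt, RED_Wh2; auto.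
Qed.

Lemma RR_proj a b : RR a b -> RD (vn a) (vn b).
Proof.
 intros H; induction H as [x y [H|H]| |]. apply RED_eqt, vn_eqt; auto.
 apply proj_all; auto. apply RED_refl. eapply RED_trans; eauto.
Qed.

Scheme tT_ind' := Induction for tT Sort Prop
with tQ_ind' := Induction for tQ Sort Prop
with tW_ind' := Induction for tW Sort Prop
with tK_ind' := Induction for tK Sort Prop.
Combined Scheme tgt_ind from tT_ind', tQ_ind', tW_ind', tK_ind'.

Lemma inv_shW_all :
 (forall t c, invT (shWT c t) = sho c (invT t)) /\
 (forall q c, invQ (shWQ c q) = shoj c (invQ q)) /\
 (forall w c, invW (shWW c w) = sho c (invW w)) /\
 (forall k c X, invK (shWK c k) (sho c X) = shoj c (invK k X)).
Proof.
 apply tgt_ind; intros; simpl; rewrite ?H, ?H0; auto.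
 all: try (rewrite <- H0; auto).
Qed.
Lemma inv_shK_all :
 (forall t c, invT (shKT c t) = shk c (invT t)) /\
 (forall q c, invQ (shKQ c q) = shkj c (invQ q)) /\
 (forall w c, invW (shKW c w) = shk c (invW w)) /\
 (forall k c X, invK (shKK c k) (shk c X) = shkj c (invK k X)).
Proof.
 apply tgt_ind; intros; simpl; rewrite ?H, ?H0; auto.
 all: try (rewrite <- H0; auto).
Qed.
Lemma invT_shW t c : invT (shWT c t) = sho c (invT t). Proof. apply inv_shW_all. Qed.
Lemma invQ_shW q c : invQ (shWQ c q) = shoj c (invQ q). Proof. apply inv_shW_all. Qed.
Lemma invW_shW w c : invW (shWW c w) = sho c (invW w). Proof. apply inv_shW_all. Qed.
Lemma invT_shK t c : invT (shKT c t) = shk c (invT t). Proof. apply inv_shK_all. Qed.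
Lemma invQ_shK q c : invQ (shKQ c q) = shkj c (invQ q). Proof. apply inv_shK_all. Qed.
Lemma invW_shK w c : invW (shKW c w) = shk c (invW w). Proof. apply inv_shK_all. Qed.

Lemma inv_subW_all :
 (forall t j w, invT (subWT j w t) = subst_o j (invW w) (invT t)) /\
 (forall q j w, invQ (subWQ j w q) = subst_oj j (invW w) (invQ q)) /\
 (forall v j w, invW (subWW j w v) = subst_o j (invW w) (invW v)) /\
 (forall k j w X, invK (subWK j w k) (subst_o j (invW w) X) = subst_oj j (invW w) (invK k X)).
Proof.
 apply tgt_ind; intros; simpl; rewrite ?H, ?H0, ?invW_shK, ?invW_shW; auto.
 all: try (destruct (n =? j); auto; destruct (j <? n); auto).
Qed.
Lemma invT_subW t j w : invT (subWT j w t) = subst_o j (invW w) (invT t). Proof. apply inv_subW_all. Qed.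
Lemma invQ_subW q j w : invQ (subWQ j w q) = subst_oj j (invW w) (invQ q). Proof. apply inv_subW_all. Qed.

Lemma inv_crn_all :
 (forall t j n, invT (subKT j (KVar n) t) = crn j n (invT t)) /\
 (forall q j n, invQ (subKQ j (KVar n) q) = crnj j n (invQ q)) /\
 (forall v j n, invW (subKW j (KVar n) v) = crn j n (invW v)) /\
 (forall k j n X, invK (subKK j (KVar n) k) (crn j n X) = crnj j n (invK k X)).
Proof.
 apply tgt_ind; intros; simpl; rewrite ?H, ?H0; auto.
 all: try (destruct (n =? j); auto; destruct (j <? n); auto).
Qed.
Lemma invQ_crn q j n : invQ (subKQ j (KVar n) q) = crnj j n (invQ q). Proof. apply inv_crn_all. Qed.

Lemma jhead_invQ_shK q : jhead (invQ (shKQ 0 q)) = S (jhead (invQ q)).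
Proof. rewrite invQ_shK, shkj_ren, jhead_ren. auto. Qed.
Lemma jbody_invQ_shK q : jbody (invQ (shKQ 0 q)) = shk 0 (jbody (invQ q)).
Proof. rewrite invQ_shK, shkj_ren, jbody_ren, shk_ren. auto. Qed.
Lemma jhead_invQ_shW q : jhead (invQ (shWQ 1 q)) = jhead (invQ q).
Proof. rewrite invQ_shW, shoj_ren, jhead_ren. auto. Qed.
Lemma jbody_invQ_shW q : jbody (invQ (shWQ 1 q)) = sho 1 (jbody (invQ q)).
Proof. rewrite invQ_shW, shoj_ren, jbody_ren, sho_ren. auto. Qed.
Lemma shk_shk_comm b j : shk 0 (shk j b) = shk (S j) (shk 0 b).
Proof. rnorm. rext. Qed.
Lemma sho_shk_comm b j : sho 1 (shk j b) = shk j (sho 1 b).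
Proof. rnorm. rext. Qed.

Lemma inv_ssub_all :
 (forall t j q, eqt (crn j (jhead (invQ q)) (ssub j (shk j (jbody (invQ q))) (invT t)))
                    (invT (subKT j (KLam q) t))) /\
 (forall q0 j q, eqj (crnj j (jhead (invQ q)) (ssubj j (shk j (jbody (invQ q))) (invQ q0)))
                    (invQ (subKQ j (KLam q) q0))) /\
 (forall w j q, eqt (crn j (jhead (invQ q)) (ssub j (shk j (jbody (invQ q))) (invW w)))
                    (invW (subKW j (KLam q) w))) /\
 (forall k j q X X', eqt (crn j (jhead (invQ q)) (ssub j (shk j (jbody (invQ q))) X)) X' ->
    eqj (crnj j (jhead (invQ q)) (ssubj j (shk j (jbody (invQ q))) (invK k X)))
        (invK (subKK j (KLam q) k) X')).
Proof.
 apply tgt_ind; intros; simpl.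
 -
   apply eqt_Mu. specialize (H (S j) (shKQ 0 q)).
   rewrite jhead_invQ_shK, jbody_invQ_shK, <- shk_shk_comm in H. auto.
 - apply eqt_App; auto.
 - apply H. apply H0.
 - apply H0. apply H.
 - apply eqt_refl.
 - apply eqt_Lam. specialize (H j (shWQ 1 q)).
   rewrite jhead_invQ_shW, jbody_invQ_shW, <- sho_shk_comm in H. auto.
 -
   destruct (Nat.eqb_spec n j).
   + subst. simpl. rewrite Nat.eqb_refl. simpl. rewrite crn_shk.
     eapply eqj_trans. apply eqj_E3. apply eqj_JWh; auto. apply eqj_sym, eqj_flat.
   + simpl. apply Nat.eqb_neq in n0. rewrite n0. simpl. rewrite ?n0.
     destruct (j <? n); apply eqj_Jmp; auto.
 -
   apply eqj_JWh; auto. specialize (H j (shWQ 1 q)).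
   rewrite jhead_invQ_shW, jbody_invQ_shW, <- sho_shk_comm in H. auto.
Qed.

Scheme stT_ind' := Induction for stT Sort Prop
with stQ_ind' := Induction for stQ Sort Prop
with stW_ind' := Induction for stW Sort Prop
with stK_ind' := Induction for stK Sort Prop.
Combined Scheme st_ind from stT_ind', stQ_ind', stW_ind', stK_ind'.

Lemma invW_val w : is_val (invW w) = true.
Proof. destruct w; auto. Qed.

Lemma RRJ_invK k X X' : RR X X' -> RRJ (invK k X) (invK k X').
Proof. destruct k; simpl; intros. apply REDJ_Jmp; auto. apply REDJ_JWh2; auto. Qed.

Lemma sim_all :
 (forall t t', stT t t' -> RR (invT t) (invT t')) /\
 (forall q q', stQ q q' -> RRJ (invQ q) (invQ q')) /\
 (forall w w', stW w w' -> RR (invW w) (invW w')) /\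
 (forall k k', stK k k' -> forall X, RRJ (invK k X) (invK k' X)).
Proof.
 apply st_ind; intros; simpl.
 -
   eapply RED_trans. apply RED_root. apply rr_beta_lam. apply invW_val.
   rewrite invT_subW. apply RED_root. apply rr_beta_let. apply invW_val.
 - rewrite invT_shK. apply RED_root. apply rr_eta_mu.
 - apply RED_Mu; auto.
 - apply RED_App1; auto.
 - apply RED_App2; auto.
 -
   destruct k as [n|q'']; simpl.
   + rewrite invQ_crn. apply REDJ_root. apply r_beta_jmp.
   + eapply REDJ_trans. apply REDJ_eqj. apply eqj_flat. simpl.
     eapply REDJ_trans. apply REDJ_Jmp. apply RED_root. apply rr_beta_mu.
     eapply REDJ_trans. apply REDJ_root. apply r_beta_jmp.
     apply REDJ_eqj. apply (proj1 (proj2 inv_ssub_all) q 0 q'').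
 -
   eapply REDJ_trans. apply REDJ_eqj. apply eqj_flat. simpl.
   eapply REDJ_trans. apply REDJ_Jmp. apply RED_root. apply rr_beta_let. apply invW_val.
   rewrite invQ_subW. apply REDJ_eqj. apply eqj_sym.
   eapply eqj_trans. apply eqj_flat. rewrite jhead_subst, jbody_subst. apply eqj_refl.
 - apply H.
 - apply RRJ_invK; auto.
 - apply RRJ_invK; auto.
 - apply H.
 -
   rewrite invW_shW. apply RED_root. apply rr_eta_lam. apply invW_val.
 - apply RED_Lam; auto.
 -
   destruct k as [n|q]; simpl.
   + eapply REDJ_trans. apply REDJ_eqj. apply eqj_sym, eqj_E3.
     apply REDJ_Jmp. apply RED_root. apply rr_eta_let.
   + rewrite invQ_shW.
     eapply REDJ_trans. apply REDJ_eqj. apply eqj_flat. simpl.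
     rewrite shoj_ren, jhead_ren, jbody_ren, <- sho_ren.
     eapply REDJ_trans. apply REDJ_Jmp. apply RED_Wh1. apply RED_root. apply rr_beta_let. auto.
     rewrite subst_var_sho. apply REDJ_eqj. apply eqj_sym.
     eapply eqj_trans. apply eqj_flat. apply eqj_refl.
 - apply REDJ_JWh1; auto.
Qed.

Lemma sim_tred N N' : tred N N' -> RR (invT N) (invT N').
Proof.
 induction 1. apply sim_all; auto. apply RED_refl. eapply RED_trans; eauto.
Qed.

Definition khead (K : tK) : nat := match K with KVar n => n | KLam q => jhead (invQ q) end.
Definition kbody (K : tK) : option tm := match K with KVar _ => None | KLam q => Some (jbody (invQ q)) end.
Definition ctxo (o : option tm) (X : tm) : tm := match o with None => X | Some B => Wh B X end.
Definition match_o (o' o : option tm) : Prop :=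
  match o', o with None, None => True | Some B', Some B => eqt (vn B') (vn B) | _, _ => False end.

Lemma jhead_invK K X : jhead (invK K X) = khead K. Proof. destruct K; auto. Qed.
Lemma jbody_invK K X : jbody (invK K X) = ctxo (kbody K) X. Proof. destruct K; auto. Qed.
Lemma ctxo_E1 o P X : eqt (ctxo o (Wh P X)) (Wh (ctxo (option_map (sho 1) o) P) X).
Proof. destruct o; simpl. apply eqt_E1. apply eqt_refl. Qed.
Lemma RD_ctxo o X X' : RD X X' -> RD (ctxo o X) (ctxo o X').
Proof. destruct o; simpl; auto. apply RED_Wh2. Qed.
Lemma match_sho o' o : match_o o' o -> match_o (option_map (sho 1) o') (option_map (sho 1) o).
Proof. destruct o', o; simpl; auto. rewrite !vn_sho. apply eqt_sho. Qed.
Lemma eqt_ctxo o' o X X' : match_o o' o -> eqt (vn X) (vn X') -> eqt (vn (ctxo o' X)) (vn (ctxo o X')).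
Proof. destruct o', o; simpl; intros; try contradiction; auto. apply eqt_Wh; auto. Qed.
Lemma kbody_shW K : kbody (shWK 0 K) = option_map (sho 1) (kbody K).
Proof. destruct K; simpl; auto. rewrite jbody_invQ_shW; auto. Qed.
Lemma khead_shW K : khead (shWK 0 K) = khead K.
Proof. destruct K; simpl; auto. rewrite jhead_invQ_shW; auto. Qed.
Lemma ren_S_ro ro rk b : ren (fun i => S (ro i)) rk b = sho 0 (ren ro rk b).
Proof. rnorm. rext. Qed.
Lemma ren_S_rk ro rk b : ren ro (fun i => S (rk i)) b = shk 0 (ren ro rk b).
Proof. rnorm. rext. Qed.
Lemma eqj_vnj_flat Q : eqj (vnj Q) (Jmp (jhead Q) (vn (jbody Q))).
Proof. rewrite <- jhead_vn, <- jbody_vn. apply eqj_flat. Qed.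

Lemma collapse_lemma Z Y Jb : RD (shk 0 Z) Y -> eqt (vn Y) (vn (jbody Jb)) -> jhead Jb = 0 ->
  RD Z (crn 0 0 Y) /\ eqt (vn (crn 0 0 Y)) (vn (Mu Jb)).
Proof.
 intros H1 H2 H3.
 assert (E: kocc 0 Y = false) by (eapply RD_kocc_false; eauto; apply kocc_shk).
 split.
 - rewrite <- (crn_shk Z 0 0). apply RD_crn; auto.
 - simpl. rewrite col_collapse. rewrite vn_crn, jbody_vn. apply eqt_crn; auto.
   rewrite jhead_vn; auto.
   rewrite jbody_vn, <- (kocc_eqt _ _ 0 H2), kocc_vn; auto.
Qed.

Lemma claim_of_val M ro rk K o' W :
  invQ (cps M ro rk K) = invK K W ->
  (exists Y, RD (ren ro rk M) Y /\ eqt (vn Y) (vn W)) ->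
  match_o o' (kbody K) ->
  exists Y, RD (ctxo o' (ren ro rk M)) Y /\ eqt (vn Y) (vn (jbody (invQ (cps M ro rk K))))
            /\ jhead (invQ (cps M ro rk K)) = khead K.
Proof.
 intros E [Y [H1 H2]] H3. exists (ctxo o' Y). rewrite E, jbody_invK, jhead_invK.
 split; auto. apply RD_ctxo; auto. split; auto. apply eqt_ctxo; auto.
Qed.

Definition Claim (M : tm) := forall ro rk K o', match_o o' (kbody K) ->
  exists Y, RD (ctxo o' (ren ro rk M)) Y /\ eqt (vn Y) (vn (jbody (invQ (cps M ro rk K))))
            /\ jhead (invQ (cps M ro rk K)) = khead K.
Definition Claimv (M : tm) := is_val M = true -> forall ro rk,
  exists Y, is_val Y = true /\ RD (ren ro rk M) Y /\ eqt (vn Y) (vn (invW (star M ro rk))).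
Definition Claimj (J : jm) := forall ro rk,
  exists J0, RDJ (renj ro rk J) J0 /\ eqj (vnj J0) (vnj (invQ (cpsj J ro rk))).

Lemma cps_app_vv a b ro rk K : is_val a = true -> is_val b = true ->
  cps (App a b) ro rk K = QT (TApp (star a ro rk) (star b ro rk)) K.
Proof. intros Ea Eb; simpl; rewrite Ea, Eb; auto. Qed.
Lemma cps_app_vn a b ro rk K : is_val a = true -> is_val b = false ->
  cps (App a b) ro rk K = cps b ro rk (KLam (QT (TApp (shWW 0 (star a ro rk)) (WVar 0)) (shWK 0 K))).
Proof. intros Ea Eb; simpl; rewrite Ea, Eb; auto. Qed.
Lemma cps_app_nv a b ro rk K : is_val a = false -> is_val b = true ->
  cps (App a b) ro rk K = cps a ro rk (KLam (QT (TApp (WVar 0) (shWW 0 (star b ro rk))) (shWK 0 K))).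
Proof. intros Ea Eb; simpl; rewrite Ea, Eb; auto. Qed.
Lemma cps_app_nn a b ro rk K : is_val a = false -> is_val b = false ->
  cps (App a b) ro rk K = cps a ro rk (KLam (cps b (fun i => S (ro i)) rk
                               (KLam (QT (TApp (WVar 1) (WVar 0)) (shWK 0 (shWK 0 K)))))).
Proof. intros Ea Eb; simpl; rewrite Ea, Eb; auto. Qed.

Lemma claim_all : (forall M, Claim M /\ Claimv M) /\ (forall J, Claimj J).
Proof.
 apply tmjm_ind.
 -
   intros n. split.
   + intros ro rk K o' Hm. apply claim_of_val with (W := Var (ro n)); auto.
     exists (Var (ro n)); split; [apply RED_refl|apply eqt_refl].
   + intros _ ro rk. exists (Var (ro n)). simpl; auto using RED_refl, eqt_refl.
 -
   intros b [IHc _].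
   assert (HV: Claimv (Lam b)).
   { intros _ ro rk.
     destruct (IHc (up ro) (fun i => S (rk i)) (KVar 0) None I) as [Y [H1 [H2 H3]]].
     simpl in H1. rewrite ren_S_rk in H1.
     destruct (collapse_lemma _ _ _ H1 H2 H3) as [C1 C2].
     exists (Lam (crn 0 0 Y)). split; auto. split. simpl. apply RED_Lam; auto.
     simpl. apply eqt_Lam. simpl in C2. exact C2. }
   split; auto.
   intros ro rk K o' Hm. apply claim_of_val with (W := invW (star (Lam b) ro rk)); auto.
   destruct (HV eq_refl ro rk) as [Y [_ [? ?]]]; eauto.
 -
   intros a [Ca Va] b [Cb Vb]. split; [|intros H; discriminate].
   intros ro rk K o' Hm.
   destruct (is_val a) eqn:Ea; destruct (is_val b) eqn:Eb.
   + apply claim_of_val with (W := App (invW (star a ro rk)) (invW (star b ro rk))); auto.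
     rewrite cps_app_vv; auto.
     destruct (Va Ea ro rk) as [Ya [_ [HYa1 HYa2]]]. destruct (Vb Eb ro rk) as [Yb [_ [HYb1 HYb2]]].
     exists (App Ya Yb). split. apply RED_App; auto. simpl. apply eqt_App; auto.
   + rewrite cps_app_vn; auto.
     set (K2 := KLam (QT (TApp (shWW 0 (star a ro rk)) (WVar 0)) (shWK 0 K))).
     destruct (Va Ea ro rk) as [Ya [HYa [HYa1 HYa2]]].
     set (B2 := ctxo (option_map (sho 1) o') (App (sho 0 Ya) (Var 0))).
     assert (Hm2: match_o (Some B2) (kbody K2)).
     { simpl. rewrite jbody_invK, kbody_shW, invW_shW. apply eqt_ctxo. apply match_sho; auto.
       simpl. rewrite !vn_sho. apply eqt_App; auto using eqt_refl. apply eqt_sho; auto. }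
     destruct (Cb ro rk K2 (Some B2) Hm2) as [Y [HY1 [HY2 HY3]]].
     exists Y. split; [|split; auto].
     * eapply RED_trans. apply RD_ctxo. apply RED_App1. apply HYa1.
       eapply RED_trans. apply RD_ctxo. apply RED_root. apply r_ad2; auto. rewrite is_val_ren; auto.
       eapply RED_trans. apply RED_eqt. apply ctxo_E1. apply HY1.
     * rewrite HY3. simpl. rewrite jhead_invK, khead_shW. auto.
   + rewrite cps_app_nv; auto.
     set (K1 := KLam (QT (TApp (WVar 0) (shWW 0 (star b ro rk))) (shWK 0 K))).
     destruct (Vb Eb ro rk) as [Yb [HYb [HYb1 HYb2]]].
     set (B1 := ctxo (option_map (sho 1) o') (App (Var 0) (sho 0 Yb))).
     assert (Hm1: match_o (Some B1) (kbody K1)).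
     { simpl. rewrite jbody_invK, kbody_shW, invW_shW. apply eqt_ctxo. apply match_sho; auto.
       simpl. rewrite !vn_sho. apply eqt_App; auto using eqt_refl. apply eqt_sho; auto. }
     destruct (Ca ro rk K1 (Some B1) Hm1) as [Y [HY1 [HY2 HY3]]].
     exists Y. split; [|split; auto].
     * eapply RED_trans. apply RD_ctxo. apply RED_App2. apply HYb1.
       eapply RED_trans. apply RD_ctxo. apply RED_root. apply r_ad1; auto. rewrite is_val_ren; auto.
       eapply RED_trans. apply RED_eqt. apply ctxo_E1. apply HY1.
     * rewrite HY3. simpl. rewrite jhead_invK, khead_shW. auto.
   + rewrite cps_app_nn; auto.
     set (K3 := KLam (QT (TApp (WVar 1) (WVar 0)) (shWK 0 (shWK 0 K)))).
     set (o1 := option_map (sho 1) o'). set (o2 := option_map (sho 1) o1).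
     set (B3 := ctxo o2 (App (Var 1) (Var 0))).
     assert (Hm3: match_o (Some B3) (kbody K3)).
     { simpl. rewrite jbody_invK, !kbody_shW. apply eqt_ctxo. apply match_sho, match_sho; auto.
       apply eqt_refl. }
     destruct (Cb (fun i => S (ro i)) rk K3 (Some B3) Hm3) as [Yb [HYb1 [HYb2 HYb3]]].
     set (Kb := KLam (cps b (fun i => S (ro i)) rk K3)).
     assert (Hmb: match_o (Some Yb) (kbody Kb)) by (simpl; auto).
     destruct (Ca ro rk Kb (Some Yb) Hmb) as [Y [HY1 [HY2 HY3]]].
     exists Y. split; [|split; auto].
     * eapply RED_trans. apply RD_ctxo. apply RED_root. apply r_ad1; auto. rewrite is_val_ren; auto.
       eapply RED_trans. apply RED_eqt. apply ctxo_E1. fold o1.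
       eapply RED_trans. apply RED_Wh1. 2: apply HY1.
       eapply RED_trans. apply RD_ctxo. apply RED_root. apply r_ad2; auto.
       simpl. rewrite sho_ren, is_val_ren, is_val_ren; auto.
       eapply RED_trans. apply RED_eqt. apply ctxo_E1. fold o2. simpl.
       rewrite <- ren_S_ro. apply HYb1.
     * rewrite HY3. simpl. rewrite HYb3. simpl. rewrite jhead_invK, !khead_shW. auto.
 -
   intros l [Cl _] m [Cm _]. split; [|intros H; discriminate].
   intros ro rk K o' Hm. simpl ren. simpl cps.
   assert (Hml: match_o (option_map (sho 1) o') (kbody (shWK 0 K))).
   { rewrite kbody_shW. apply match_sho; auto. }
   destruct (Cl (up ro) rk (shWK 0 K) _ Hml) as [Yl [HYl1 [HYl2 HYl3]]].
   set (Kl := KLam (cps l (up ro) rk (shWK 0 K))).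
   assert (Hmm: match_o (Some Yl) (kbody Kl)) by (simpl; auto).
   destruct (Cm ro rk Kl (Some Yl) Hmm) as [Y [HY1 [HY2 HY3]]].
   exists Y. split; [|split; auto].
   + eapply RED_trans. apply RED_eqt. apply ctxo_E1.
     eapply RED_trans. apply RED_Wh1. apply HYl1. apply HY1.
   + rewrite HY3. simpl. rewrite HYl3, khead_shW. auto.
 -
   intros J IHJ. split; [|intros H; discriminate].
   intros ro rk K o' Hm.
   apply claim_of_val with (W := Mu (invQ (cpsj J ro (up rk)))); auto.
   destruct (IHJ ro (up rk)) as [J0 [H1 H2]].
   exists (Mu J0). split. simpl. apply RED_Mu; auto. simpl. apply col_eqj; auto.
 -
   intros k m [Cm _] ro rk.
   destruct (Cm ro rk (KVar (rk k)) None I) as [Y [HY1 [HY2 HY3]]].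
   exists (Jmp (rk k) Y). split. simpl. apply REDJ_Jmp; auto.
   simpl vnj at 1. simpl cpsj. eapply eqj_trans. 2: apply eqj_sym, eqj_vnj_flat.
   rewrite HY3. simpl. apply eqj_Jmp; auto.
 -
   intros J IHJ m [Cm _] ro rk.
   destruct (IHJ (up ro) rk) as [J0 [HJ1 HJ2]].
   destruct (flat_eqj _ _ HJ2) as [Hh Hb]. rewrite !jhead_vn in Hh. rewrite !jbody_vn in Hb.
   set (Kj := KLam (cpsj J (up ro) rk)).
   assert (Hmj: match_o (Some (jbody J0)) (kbody Kj)) by (simpl; auto).
   destruct (Cm ro rk Kj (Some (jbody J0)) Hmj) as [Y [HY1 [HY2 HY3]]].
   exists (Jmp (jhead J0) Y). split.
   + simpl. eapply REDJ_trans. apply REDJ_JWh1. apply HJ1.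
     eapply REDJ_trans. apply REDJ_eqj. apply eqj_flat. simpl. apply REDJ_Jmp. apply HY1.
   + simpl vnj at 1. simpl cpsj. eapply eqj_trans. 2: apply eqj_sym, eqj_vnj_flat.
     unfold Kj in *. rewrite HY3. simpl. rewrite Hh. apply eqj_Jmp; auto.
Qed.

Lemma base M : exists Z, RD M Z /\ eqt Z (vn (invT (cps_top M))).
Proof.
 destruct (proj1 (proj1 claim_all M) (fun i => i) S (KVar 0) None I) as [Y [H1 [H2 H3]]].
 simpl in H1.
 assert (E: ren (fun i => i) S M = shk 0 M) by (rewrite shk_ren; apply ren_ext; auto).
 rewrite E in H1.
 destruct (collapse_lemma _ _ _ H1 H2 H3) as [C1 C2].
 exists (vn (crn 0 0 Y)). split.
 - eapply RED_trans. apply C1. apply RD_vn.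
 - exact C2.
Qed.

Theorem theorem1p34 (M : tm) (N : tT) :
  tred (cps_top M) N ->
  forall P : tm, vred (invT N) P -> vnf P -> red M P.
Proof.
 intros Ht P Hv Hn.
 destruct (base M) as [Z [HZ1 HZ2]].
 pose proof (RR_proj _ _ (sim_tred _ _ Ht)) as HP.
 pose proof (VR_vn _ _ Hv) as HV.
 pose proof (vnf_vn P Hn) as HN.
 change (RD M P).
 eapply RED_trans. apply HZ1. eapply RED_trans. apply RED_eqt, HZ2.
 eapply RED_trans. apply HP. apply RED_eqt. eapply eqt_trans. apply HV. apply eqt_sym, HN.
Qed.
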